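(* Over the family of 3-periodics of $E$: (i) the locus of the orthocenter $X_4$ (triangle center function $h=\dfrac{1}{s_1(s_2^2+s_3^2-s_1^2)}$), taken as the closure of its set of defined positions, is the ellipse $x^2/a_4^2+y^2/b_4^2=1$ with $a_4=k_4/a$, $b_4=k_4/b$, where $k_4=\dfrac{(a^2+b^2)\delta-2a^2b^2}{c^2}$; (ii) the locus of the Spieker center $X_{10}$ ($h=\dfrac{s_2+s_3}{s_1}$) is the ellipse $x^2/a_{10}^2+y^2/b_{10}^2=1$ with $a_{10}=k_{10}/a$, $b_{10}=k_{10}/b$, where $k_{10}=\dfrac{(a^2+b^2)\delta-a^4-b^4}{2c^2}$. In particular both loci are ellipses similar to a $90^\circ$-rotated copy of $E$.
   Context: Fix real numbers $a>b>0$, let $E$ be the ellipse $x^2/a^2+y^2/b^2=1$, $c^2=a^2-b^2$ and $\delta=\sqrt{a^4-a^2b^2+b^4}$. A 3-periodic is a non-degenerate triangle $P_1P_2P_3$ with all vertices on $E$ such that at each vertex $P_j$ the normal line to $E$ at $P_j$ bisects the interior angle of the triangle at $P_j$. For a triangle let $s_1=|P_2P_3|$, $s_2=|P_3P_1|$, $s_3=|P_1P_2|$. Given a triangle center function $h(s_1,s_2,s_3)$, the center $X_h$ is the point with trilinears $p:q:r=h(s_1,s_2,s_3):h(s_2,s_3,s_1):h(s_3,s_1,s_2)$, i.e. the Cartesian point $\dfrac{p s_1P_1+q s_2P_2+r s_3P_3}{p s_1+q s_2+r s_3}$ (equivalently, after clearing denominators in $p,q,r$ by a common factor). The locus of $X_h$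 is the set of points $X_h(T)$ over all 3-periodics $T$ for which it is defined. *)

(* Defs.v *)
From Stdlib Require Import Reals Lra.
Open Scope R_scope.

Definition pt := (R * R)%type.

Definition on_ellipse (a b : R) (P : pt) : Prop :=
  (fst P)^2 / a^2 + (snd P)^2 / b^2 = 1.

Definition dist (P Q : pt) : R :=
  sqrt ((fst P - fst Q)^2 + (snd P - snd Q)^2).

Definition cross (u v : pt) : R := fst u * snd v - snd u * fst v.

Definition vsub (P Q : pt) : pt := (fst P - fst Q, snd P - snd Q).

Definition nondegenerate (P1 P2 P3 : pt) : Prop :=
  cross (vsub P2 P1) (vsub P3 P1) <> 0.

(* direction of the interior angle bisector at P, for the triangle P Q S:
   sum of the unit vectors from P towards Q and towards S *)
Definition bisector_dir (P Q S : pt) : pt :=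
  (fst (vsub Q P) / dist Q P + fst (vsub S P) / dist S P,
   snd (vsub Q P) / dist Q P + snd (vsub S P) / dist S P).

Definition normal_dir (a b : R) (P : pt) : pt :=
  (fst P / a^2, snd P / b^2).

(* the normal line at P (through P) bisects the interior angle at P:
   the two lines through P are equal, i.e. their directions are parallel *)
Definition normal_bisects (a b : R) (P Q S : pt) : Prop :=
  cross (normal_dir a b P) (bisector_dir P Q S) = 0.

Definition three_periodic (a b : R) (P1 P2 P3 : pt) : Prop :=
  nondegenerate P1 P2 P3 /\
  on_ellipse a b P1 /\ on_ellipse a b P2 /\ on_ellipse a b P3 /\
  normal_bisects a b P1 P2 P3 /\ normal_bisects a b P2 P3 P1 /\
  normal_bisects a b P3 P1 P2.

(* A triangle center function h, together with its domain of definition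
   hdom (the set of (s1,s2,s3) where the expression h is defined). *)
Section Center.
Variables (h : R -> R -> R -> R) (hdom : R -> R -> R -> Prop).

Definition center_defined (P1 P2 P3 : pt) : Prop :=
  let s1 := dist P2 P3 in let s2 := dist P3 P1 in let s3 := dist P1 P2 in
  hdom s1 s2 s3 /\ hdom s2 s3 s1 /\ hdom s3 s1 s2 /\
  h s1 s2 s3 * s1 + h s2 s3 s1 * s2 + h s3 s1 s2 * s3 <> 0.

Definition center (P1 P2 P3 : pt) : pt :=
  let s1 := dist P2 P3 in let s2 := dist P3 P1 in let s3 := dist P1 P2 in
  let p := h s1 s2 s3 in let q := h s2 s3 s1 in let r := h s3 s1 s2 in
  let w := p * s1 + q * s2 + r * s3 in
  ((p * s1 * fst P1 + q * s2 * fst P2 + r * s3 * fst P3) / w,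
   (p * s1 * snd P1 + q * s2 * snd P2 + r * s3 * snd P3) / w).

Definition locus (a b : R) (X : pt) : Prop :=
  exists P1 P2 P3, three_periodic a b P1 P2 P3 /\
    center_defined P1 P2 P3 /\ X = center P1 P2 P3.
End Center.

Definition closure (S : pt -> Prop) (X : pt) : Prop :=
  forall eps, eps > 0 -> exists Y, S Y /\ dist X Y < eps.

Definition h4 (s1 s2 s3 : R) : R := 1 / (s1 * (s2^2 + s3^2 - s1^2)).
Definition h4_dom (s1 s2 s3 : R) : Prop := s1 * (s2^2 + s3^2 - s1^2) <> 0.

Definition h10 (s1 s2 s3 : R) : R := (s2 + s3) / s1.
Definition h10_dom (s1 s2 s3 : R) : Prop := s1 <> 0.

Definition delta (a b : R) : R := sqrt (a^4 - a^2*b^2 + b^4).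
Definition csq (a b : R) : R := a^2 - b^2.
Definition k4 (a b : R) : R := ((a^2 + b^2) * delta a b - 2 * a^2 * b^2) / csq a b.
Definition k10 (a b : R) : R := ((a^2 + b^2) * delta a b - a^4 - b^4) / (2 * csq a b).

(* Main.v *)
Require Import Defs.
From Stdlib Require Import Reals.
Open Scope R_scope.
From Stdlib Require Import Lra Nsatz Classical.
Open Scope R_scope.

Section Params.
Variables (a b : R) (hb : 0 < b) (hab : b < a).
Let c2 := a^2 - b^2.

Lemma c2_pos : 0 < a^2 - b^2.
Proof. nra. Qed.

Lemma delta_sq : delta a b ^ 2 = a^4 - a^2*b^2 + b^4.
Proof. unfold delta. rewrite pow2_sqrt; [ring|].
 replace (a^4 - a^2*b^2 + b^4) with ((a^2-b^2)^2 + (a*b)^2) by ring. nra. Qed.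

Lemma delta_pos : 0 < delta a b.
Proof. unfold delta. apply sqrt_lt_R0.
 replace (a^4 - a^2*b^2 + b^4) with ((a^2-b^2)^2 + (a*b)^2) by ring.
 assert (0 < a*b) by (apply Rmult_lt_0_compat; lra). generalize (pow_lt _ 2 H) (pow2_ge_0 (a^2-b^2)). lra. Qed.

Definition p0 := (2 * delta a b - a^2 - b^2) / (a^2 - b^2).

Lemma p0_rel : 2 * delta a b = p0 * (a^2-b^2) + a^2 + b^2.
Proof. unfold p0. field. generalize c2_pos; lra. Qed.

Lemma p0_quad : (a^2-b^2)*p0^2 + 2*(a^2+b^2)*p0 - 3*(a^2-b^2) = 0.
Proof. generalize delta_sq p0_rel c2_pos; intros H1 H2 H3.
 assert (E: (p0 * (a ^ 2 - b ^ 2) + a ^ 2 + b ^ 2)^2 = 4*(a^4 - a^2*b^2 + b^4)).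
 { rewrite <- H2. rewrite <- H1. ring. }
 apply Rmult_eq_reg_l with (a^2-b^2); [|lra]. rewrite Rmult_0_r.
 replace ((a ^ 2 - b ^ 2) * ((a ^ 2 - b ^ 2) * p0 ^ 2 + 2 * (a ^ 2 + b ^ 2) * p0 - 3 * (a ^ 2 - b ^ 2)))
  with ((p0 * (a ^ 2 - b ^ 2) + a ^ 2 + b ^ 2)^2 - 4*(a^4 - a^2*b^2 + b^4)) by ring.
 rewrite E. ring. Qed.

Lemma p0_bounds : 0 < p0 < 1.
Proof. generalize delta_sq c2_pos delta_pos; intros H1 H3 H4.
 assert (Ha2: 0 < a^2) by nra. assert (Hb2: 0 < b^2) by nra.
 assert (A: 2 * delta a b > a^2 + b^2).
 { destruct (Rle_or_lt (2 * delta a b) (a^2 + b^2)) as [h|h]; [|lra]. exfalso.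
   assert (h1: 0 <= a^2+b^2 - 2*delta a b) by lra. assert (h2: 0 <= a^2+b^2 + 2*delta a b) by lra.
   generalize (Rmult_le_pos _ _ h1 h2). intros h3.
   assert (E: (a ^ 2 + b ^ 2 - 2 * delta a b) * (a ^ 2 + b ^ 2 + 2 * delta a b) = -3*(a^2-b^2)^2).
   { replace ((a ^ 2 + b ^ 2 - 2 * delta a b) * (a ^ 2 + b ^ 2 + 2 * delta a b)) with ((a^2+b^2)^2 - 4 * delta a b ^2) by ring.
     rewrite H1. ring. }
   rewrite E in h3. generalize (pow_lt _ 2 H3). lra. }
 assert (B: 2 * delta a b < 2 * a^2).
 { destruct (Rle_or_lt (2 * a^2) (2 * delta a b)) as [h|h]; [|lra]. exfalso.
   assert (h1: 0 <= 2*delta a b - 2*a^2) by lra. assert (h2: 0 <= 2*delta a b + 2*a^2) by lra.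
   generalize (Rmult_le_pos _ _ h1 h2). intros h3.
   assert (E: (2*delta a b - 2*a^2) * (2*delta a b + 2*a^2) = -4*a^2*b^2 + 4*b^4).
   { replace ((2*delta a b - 2*a^2) * (2*delta a b + 2*a^2)) with (4 * delta a b ^2 - 4*(a^2)^2) by ring.
     rewrite H1. ring. }
   rewrite E in h3. assert (0 < b^2 * (a^2-b^2)) by (apply Rmult_lt_0_compat; lra). nra. }
 unfold p0. split.
 - apply Rdiv_lt_0_compat; lra.
 - apply Rmult_lt_reg_r with (a^2-b^2); [lra|]. unfold Rdiv. rewrite Rmult_assoc, Rinv_l; lra. Qed.

Lemma a2_eq : 4*p0*a^2 = (a^2-b^2)*(3-p0)*(1+p0).
Proof. generalize p0_quad; intros. nra. Qed.
Lemma b2_eq : 4*p0*b^2 = (a^2-b^2)*(3+p0)*(1-p0).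
Proof. generalize p0_quad; intros. nra. Qed.

Lemma k4_eq : k4 a b = (a^2-b^2)*(5-p0^2)/4.
Proof. unfold k4, csq. generalize p0_rel p0_quad c2_pos p0_bounds; intros H1 H2 H3 H4.
 replace (delta a b) with ((p0 * (a ^ 2 - b ^ 2) + a ^ 2 + b ^ 2)/2) by lra.
 apply Rmult_eq_reg_l with (4*p0*(a^2-b^2)); [|nra].
 field_simplify; [|lra]. nra. Qed.

Lemma k10_eq : k10 a b = (a^2-b^2)*(1-p0^2)/8.
Proof. unfold k10, csq. generalize p0_rel p0_quad c2_pos p0_bounds; intros H1 H2 H3 H4.
 replace (delta a b) with ((p0 * (a ^ 2 - b ^ 2) + a ^ 2 + b ^ 2)/2) by lra.
 apply Rmult_eq_reg_l with (8*p0*(a^2-b^2)); [|nra].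
 field_simplify; [|lra]. nra. Qed.
End Params.

Lemma ddist_sq P Q : Defs.dist P Q ^2 = (fst P - fst Q)^2 + (snd P - snd Q)^2.
Proof. unfold Defs.dist. rewrite pow2_sqrt; [ring|]. generalize (pow2_ge_0 (fst P - fst Q)) (pow2_ge_0 (snd P - snd Q)); lra. Qed.
Lemma ddist_sym P Q : Defs.dist P Q = Defs.dist Q P.
Proof. unfold Defs.dist. f_equal. ring. Qed.
Lemma ddist_nonneg P Q : 0 <= Defs.dist P Q.
Proof. unfold Defs.dist. apply sqrt_pos. Qed.
Lemma ddist_pos P Q : 0 < (fst P - fst Q)^2 + (snd P - snd Q)^2 -> 0 < Defs.dist P Q.
Proof. intros. unfold Defs.dist. apply sqrt_lt_R0. lra. Qed.
Lemma ddist_eq P Q r : 0 <= r -> r^2 = (fst P - fst Q)^2 + (snd P - snd Q)^2 -> Defs.dist P Q = r.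
Proof. intros H1 H2. unfold Defs.dist. rewrite <- H2. apply sqrt_pow2. exact H1. Qed.

Lemma sq_sum0 x y : x^2 + y^2 = 0 -> x = 0 /\ y = 0.
Proof. intros H. apply Rplus_sqr_eq_0. unfold Rsqr. simpl in H. lra. Qed.

Lemma refl_fwd (n1 n2 U1 U2 V1 V2 dU dV : R) :
  0 < dU -> 0 < dV -> dU^2 = U1^2 + U2^2 -> dV^2 = V1^2 + V2^2 -> U1*V2 - U2*V1 <> 0 ->
  n1 * (U2/dU + V2/dV) - n2 * (U1/dU + V1/dV) = 0 ->
  (n1*U1 + n2*U2) * dV = (n1*V1 + n2*V2) * dU.
Proof. intros hU hV eU eV hc hn.
 set (u1 := U1/dU). set (u2 := U2/dU). set (v1 := V1/dV). set (v2 := V2/dV).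
 assert (Hu : u1^2+u2^2 = 1). { unfold u1,u2. field_simplify; [|lra]. rewrite <- eU. field. lra. }
 assert (Hv : v1^2+v2^2 = 1). { unfold v1,v2. field_simplify; [|lra]. rewrite <- eV. field. lra. }
 fold u1 u2 v1 v2 in hn.
 assert (Hid : (n1*(u1-v1)+n2*(u2-v2))*((u1+v1)^2+(u2+v2)^2) =
   (n1*(u1+v1)+n2*(u2+v2))*((u1-v1)*(u1+v1)+(u2-v2)*(u2+v2))
   + ((u1+v1)*n2 - (u2+v2)*n1)*((u1+v1)*(u2-v2) - (u2+v2)*(u1-v1))) by ring.
 assert (Hdw : (u1-v1)*(u1+v1)+(u2-v2)*(u2+v2) = 0) by nra.
 rewrite Hdw in Hid.
 replace ((u1+v1)*n2 - (u2+v2)*n1) with (n2*(u1+v1) - n1*(u2+v2)) in Hid by ring.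
 assert (Hw : (u1+v1)^2+(u2+v2)^2 <> 0).
 { intro E. apply hc.
   destruct (sq_sum0 _ _ E) as [E1 E2].
   assert (e1: U1 = u1*dU) by (unfold u1; field; lra). assert (e2: U2 = u2*dU) by (unfold u2; field; lra).
   assert (e3: V1 = v1*dV) by (unfold v1; field; lra). assert (e4: V2 = v2*dV) by (unfold v2; field; lra).
   rewrite e1, e2, e3, e4. replace v1 with (-u1) by lra. replace v2 with (-u2) by lra. ring. }
 assert (Hnd : n1*(u1-v1)+n2*(u2-v2) = 0).
 { apply Rmult_eq_reg_r with ((u1+v1)^2+(u2+v2)^2); [|exact Hw]. rewrite Hid.
   replace (n2 * (u1 + v1) - n1 * (u2 + v2)) with (-(n1 * (u2 + v2) - n2 * (u1 + v1))) by ring.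
   rewrite hn. ring. }
 assert (F: (n1*U1 + n2*U2) * dV - (n1*V1 + n2*V2) * dU = dU*dV*(n1*(u1-v1)+n2*(u2-v2))).
 { unfold u1,u2,v1,v2. field. lra. }
 rewrite Hnd, Rmult_0_r in F. lra. Qed.

Lemma refl_bwd (n1 n2 U1 U2 V1 V2 dU dV : R) :
  0 < dU -> 0 < dV -> dU^2 = U1^2 + U2^2 -> dV^2 = V1^2 + V2^2 -> U1*V2 - U2*V1 <> 0 ->
  (n1*U1 + n2*U2) * dV = (n1*V1 + n2*V2) * dU ->
  n1 * (U2/dU + V2/dV) - n2 * (U1/dU + V1/dV) = 0.
Proof. intros hU hV eU eV hc hn.
 set (u1 := U1/dU). set (u2 := U2/dU). set (v1 := V1/dV). set (v2 := V2/dV).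
 assert (Hu : u1^2+u2^2 = 1). { unfold u1,u2. field_simplify; [|lra]. rewrite <- eU. field. lra. }
 assert (Hv : v1^2+v2^2 = 1). { unfold v1,v2. field_simplify; [|lra]. rewrite <- eV. field. lra. }
 assert (Hnd : n1*(u1-v1)+n2*(u2-v2) = 0).
 { apply Rmult_eq_reg_r with (dU*dV); [|nra].
   assert (F: (n1*(u1-v1)+n2*(u2-v2))*(dU*dV) = (n1*U1 + n2*U2) * dV - (n1*V1 + n2*V2) * dU).
   { unfold u1,u2,v1,v2. field. lra. }
   rewrite F. lra. }

 assert (Hdw : (u1-v1)*(u1+v1)+(u2-v2)*(u2+v2) = 0) by nra.
 assert (Hid : (n1*(u2+v2) - n2*(u1+v1))*((u1-v1)^2+(u2-v2)^2) =
   (n1*(u1-v1)+n2*(u2-v2))*((u1-v1)*(u2+v2) - (u2-v2)*(u1+v1))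
   - ((u1-v1)*n2 - (u2-v2)*n1)*((u1-v1)*(u1+v1)+(u2-v2)*(u2+v2))) by ring.
 rewrite Hnd, Hdw in Hid.
 assert (Hd : (u1-v1)^2+(u2-v2)^2 <> 0).
 { intro E. apply hc.
   destruct (sq_sum0 _ _ E) as [E1 E2].
   assert (e1: U1 = u1*dU) by (unfold u1; field; lra). assert (e2: U2 = u2*dU) by (unfold u2; field; lra).
   assert (e3: V1 = v1*dV) by (unfold v1; field; lra). assert (e4: V2 = v2*dV) by (unfold v2; field; lra).
   rewrite e1, e2, e3, e4. replace v1 with u1 by lra. replace v2 with u2 by lra. ring. }
 assert (Z: (n1*(u2+v2) - n2*(u1+v1)) * ((u1-v1)^2+(u2-v2)^2) = 0) by (rewrite Hid; ring).
 apply Rmult_integral in Z. destruct Z as [Z|Z]; [|contradiction].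
 lra. Qed.

Ltac nsatz' := cbv beta iota delta [pow] in *; nsatz.

Module Cx.
From Coquelicot Require Import Coquelicot.
Open Scope R_scope.

Lemma Cmul_eq0 (x y : C) : (x*y = 0)%C -> y <> 0%C -> x = 0%C.
Proof. intros H Hy. replace x with (x*y/y)%C by (field; auto). rewrite H. field. auto. Qed.

Lemma Csub_neq (x y : C) : x <> y -> (x - y)%C <> 0%C.
Proof. intros H E. apply H. replace x with ((x - y) + y)%C by ring. rewrite E. ring. Qed.

Definition Qf (p q : R) (x y : C) : C := (x*x + y*y - p*(x*x)*(y*y) - p - 2*q*x*y)%C.

Lemma fwd_rel (p q : R) (z1 z2 z3 : C) :
  z1 <> 0%C -> z1 <> z2 -> z1 <> z3 -> z2 <> z3 ->
  Qf p q z1 z2 = 0%C -> Qf p q z1 z3 = 0%C -> Qf p q z2 z3 = 0%C ->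
  (z1+z2+z3 = -p*(z1*z2*z3))%C /\ (z1*z2+z2*z3+z3*z1 = -p)%C /\ 2*q = p^2-1.
Proof. intros h1 h12 h13 h23 Q12 Q13 Q23. unfold Qf in *.
 assert (E21 : ((1-p*(z1*z1))*(z2+z3) - 2*q*z1 = 0)%C).
 { apply (Cmul_eq0 _ (z2 - z3)); [|apply Csub_neq; auto].
   replace (((1 - p * (z1 * z1)) * (z2 + z3) - 2 * q * z1) * (z2 - z3))%C with
     ((z1 * z1 + z2 * z2 - p * (z1 * z1) * (z2 * z2) - p - 2 * q * z1 * z2) -
      (z1 * z1 + z3 * z3 - p * (z1 * z1) * (z3 * z3) - p - 2 * q * z1 * z3))%C by ring.
   rewrite Q12, Q13. ring. }
 assert (E22 : ((1-p*(z2*z2))*(z1+z3) - 2*q*z2 = 0)%C).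
 { apply (Cmul_eq0 _ (z1 - z3)); [|apply Csub_neq; auto].
   replace (((1 - p * (z2 * z2)) * (z1 + z3) - 2 * q * z2) * (z1 - z3))%C with
     ((z1 * z1 + z2 * z2 - p * (z1 * z1) * (z2 * z2) - p - 2 * q * z1 * z2) -
      (z2 * z2 + z3 * z3 - p * (z2 * z2) * (z3 * z3) - p - 2 * q * z2 * z3))%C by ring.
   rewrite Q12, Q23. ring. }
 assert (E23 : ((1-p*(z3*z3))*(z1+z2) - 2*q*z3 = 0)%C).
 { apply (Cmul_eq0 _ (z1 - z2)); [|apply Csub_neq; auto].
   replace (((1 - p * (z3 * z3)) * (z1 + z2) - 2 * q * z3) * (z1 - z2))%C with
     ((z1 * z1 + z3 * z3 - p * (z1 * z1) * (z3 * z3) - p - 2 * q * z1 * z3) -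
      (z2 * z2 + z3 * z3 - p * (z2 * z2) * (z3 * z3) - p - 2 * q * z2 * z3))%C by ring.
   rewrite Q13, Q23. ring. }
 assert (E31 : ((1-p*(z1*z1))*(z2*z3) - (z1*z1 - p) = 0)%C).
 { replace ((1-p*(z1*z1))*(z2*z3) - (z1*z1 - p))%C with
     (z2*((1-p*(z1*z1))*(z2+z3) - 2*q*z1) - (z1 * z1 + z2 * z2 - p * (z1 * z1) * (z2 * z2) - p - 2 * q * z1 * z2))%C by ring.
   rewrite E21, Q12. ring. }
 assert (E32 : ((1-p*(z2*z2))*(z1*z3) - (z2*z2 - p) = 0)%C).
 { replace ((1-p*(z2*z2))*(z1*z3) - (z2*z2 - p))%C with
     (z1*((1-p*(z2*z2))*(z1+z3) - 2*q*z2) - (z1 * z1 + z2 * z2 - p * (z1 * z1) * (z2 * z2) - p - 2 * q * z1 * z2))%C by ring.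
   rewrite E22, Q12. ring. }
 assert (E33 : ((1-p*(z3*z3))*(z1*z2) - (z3*z3 - p) = 0)%C).
 { replace ((1-p*(z3*z3))*(z1*z2) - (z3*z3 - p))%C with
     (z1*((1-p*(z3*z3))*(z1+z2) - 2*q*z3) - (z1 * z1 + z3 * z3 - p * (z1 * z1) * (z3 * z3) - p - 2 * q * z1 * z3))%C by ring.
   rewrite E23, Q13. ring. }
 set (s := (z1*z2*z3)%C).
 assert (G12 : (p*s*(z1+z2) + (z1*z1+z1*z2+z2*z2 - p) = 0)%C).
 { apply (Cmul_eq0 _ (z1 - z2)); [|apply Csub_neq; auto].
   replace ((p*s*(z1+z2) + (z1*z1+z1*z2+z2*z2 - p)) * (z1 - z2))%C with
     (z2*((1-p*(z2*z2))*(z1*z3) - (z2*z2 - p)) - z1*((1-p*(z1*z1))*(z2*z3) - (z1*z1 - p)))%C by (unfold s; ring).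
   rewrite E32, E31. ring. }
 assert (G13 : (p*s*(z1+z3) + (z1*z1+z1*z3+z3*z3 - p) = 0)%C).
 { apply (Cmul_eq0 _ (z1 - z3)); [|apply Csub_neq; auto].
   replace ((p*s*(z1+z3) + (z1*z1+z1*z3+z3*z3 - p)) * (z1 - z3))%C with
     (z3*((1-p*(z3*z3))*(z1*z2) - (z3*z3 - p)) - z1*((1-p*(z1*z1))*(z2*z3) - (z1*z1 - p)))%C by (unfold s; ring).
   rewrite E33, E31. ring. }
 assert (S1 : (z1+z2+z3 + p*s = 0)%C).
 { apply (Cmul_eq0 _ (z2 - z3)); [|apply Csub_neq; auto].
   replace ((z1+z2+z3 + p*s) * (z2 - z3))%C with
     ((p*s*(z1+z2) + (z1*z1+z1*z2+z2*z2 - p)) - (p*s*(z1+z3) + (z1*z1+z1*z3+z3*z3 - p)))%C by ring.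
   rewrite G12, G13. ring. }
 assert (S2 : (z1*z2+z2*z3+z3*z1 + p = 0)%C).
 { replace (z1*z2+z2*z3+z3*z1 + p)%C with
     (-(p*s*(z1+z2) + (z1*z1+z1*z2+z2*z2 - p)) + (z1+z2)*(z1+z2+z3 + p*s))%C by ring.
   rewrite G12, S1. ring. }
 assert (S3 : ((2*q - (p*p-1))*z1 = 0)%C).
 { replace ((2*q - (p*p-1))*z1)%C with
     (-((1-p*(z1*z1))*(z2+z3) - 2*q*z1) + (1-p*(z1*z1))*(z1+z2+z3 + p*s) - p*(z1*((1-p*(z1*z1))*(z2*z3) - (z1*z1 - p))))%C
     by (unfold s; ring).
   rewrite E21, S1, E31. ring. }
 apply Cmul_eq0 in S3; [|auto].
 repeat split.
 - replace (z1+z2+z3)%C with (z1+z2+z3 + p*s - p*s)%C by ring. rewrite S1. unfold s. ring.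
 - replace (z1*z2+z2*z3+z3*z1)%C with (z1*z2+z2*z3+z3*z1 + p - p)%C by ring. rewrite S2. ring.
 - apply RtoC_inj. rewrite RtoC_mult, RtoC_minus, RtoC_pow.
   replace (RtoC 2 * RtoC q)%C with ((2*q - (p*p-1)) + (RtoC p * RtoC p - 1))%C by ring. rewrite S3. ring.
Qed.

Lemma unit_inv x y : x*x+y*y = 1 -> Cinv (x,y) = (x,-y).
Proof. intros H. unfold Cinv. simpl. apply injective_projections; simpl.
 - replace (x*(x*1)+y*(y*1)) with (x*x+y*y) by ring. rewrite H. field.
 - replace (x*(x*1)+y*(y*1)) with (x*x+y*y) by ring. rewrite H. field. Qed.

Lemma unit_nz x y : x*x+y*y = 1 -> ((x,y) : C) <> 0%C.
Proof. intros H E. injection E. intros -> ->. lra. Qed.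

Lemma bridge_Q p q x1 y1 x2 y2 : x1*x1+y1*y1 = 1 -> x2*x2+y2*y2 = 1 ->
  Qf p q (x1,y1) (x2,y2) = (2*(x1,y1)*(x2,y2)*RtoC((1-p)*x1*x2 + (1+p)*y1*y2 - q))%C.
Proof. intros H1 H2. unfold Qf. apply injective_projections; simpl; nsatz. Qed.

Lemma Q_from_sigma (p q : R) (x y t : C) : 2*q = p*p-1 -> (x+y+t = -p*(x*y*t))%C -> (x*y+y*t+t*x = -p)%C ->
  Qf p q x y = 0%C.
Proof. intros hq h1 h2. unfold Qf.
 assert (hq' : (2*q - (p*p-1) = 0)%C).
 { apply (f_equal RtoC) in hq. rewrite RtoC_mult, RtoC_minus, RtoC_mult in hq. rewrite hq. ring. }
 assert (hv : ((x*y)*(1-p*(t*t)) - (t*t-p) = 0)%C).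
 { replace ((x*y)*(1-p*(t*t)) - (t*t-p))%C with
     ((x*y+y*t+t*x + p) - t*(x+y+t + p*(x*y*t)))%C by ring.
   rewrite h2. replace (x+y+t)%C with (x+y+t + p*(x*y*t) - p*(x*y*t))%C by ring. rewrite h1. ring. }
 assert (h1' : (x+y+t + p*(x*y*t) = 0)%C).
 { rewrite h1. ring. }
 replace (x * x + y * y - p * (x * x) * (y * y) - p - 2 * q * x * y)%C with
   (-(p*(x*y)+1)*((x*y)*(1-p*(t*t)) - (t*t-p))
    + (x+y+t + p*(x*y*t))*(x+y - t*(p*(x*y)+1)) - (2*q - (p*p-1))*(x*y))%C by ring.
 rewrite hv, h1', hq'. ring.
Qed.

Lemma vertex_from_sigma (p : R) (x y t : C) : x <> 0%C -> (x+y+t = -p*(x*y*t))%C -> (x*y+y*t+t*x = -p)%C ->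
  ((1-p*(x*x))*(y*t) = x*x-p)%C.
Proof. intros h0 h1 h2.
 assert (E: (((1-p*(x*x))*(y*t) - (x*x-p))*x = 0)%C).
 { replace (((1-p*(x*x))*(y*t) - (x*x-p))*x)%C with
    (- (x*x)*((x+y+t) + p*(x*y*t)) + x*((x*y+y*t+t*x) + p))%C by ring.
   rewrite h1, h2. ring. }
 apply Cmul_eq0 in E; auto.
 replace ((1-p*(x*x))*(y*t))%C with (((1-p*(x*x))*(y*t) - (x*x-p)) + (x*x-p))%C by ring. rewrite E. ring. Qed.

Lemma vieta (A B D z1 z2 z3 : C) : z1 <> z2 -> z1 <> z3 -> z2 <> z3 ->
  (z1*z1*z1 + A*(z1*z1) + B*z1 + D = 0)%C ->
  (z2*z2*z2 + A*(z2*z2) + B*z2 + D = 0)%C ->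
  (z3*z3*z3 + A*(z3*z3) + B*z3 + D = 0)%C ->
  (z1+z2+z3 = -A)%C /\ (z1*z2+z2*z3+z3*z1 = B)%C /\ (z1*z2*z3 = -D)%C.
Proof. intros h12 h13 h23 c1 c2 c3.
 assert (G12 : (z1*z1+z1*z2+z2*z2 + A*(z1+z2) + B = 0)%C).
 { apply (Cmul_eq0 _ (z1 - z2)); [|apply Csub_neq; auto].
   replace ((z1*z1+z1*z2+z2*z2 + A*(z1+z2) + B)*(z1-z2))%C with
    ((z1*z1*z1 + A*(z1*z1) + B*z1 + D) - (z2*z2*z2 + A*(z2*z2) + B*z2 + D))%C by ring.
   rewrite c1, c2. ring. }
 assert (G13 : (z1*z1+z1*z3+z3*z3 + A*(z1+z3) + B = 0)%C).
 { apply (Cmul_eq0 _ (z1 - z3)); [|apply Csub_neq; auto].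
   replace ((z1*z1+z1*z3+z3*z3 + A*(z1+z3) + B)*(z1-z3))%C with
    ((z1*z1*z1 + A*(z1*z1) + B*z1 + D) - (z3*z3*z3 + A*(z3*z3) + B*z3 + D))%C by ring.
   rewrite c1, c3. ring. }
 assert (S1 : (z1+z2+z3 + A = 0)%C).
 { apply (Cmul_eq0 _ (z2 - z3)); [|apply Csub_neq; auto].
   replace ((z1+z2+z3 + A)*(z2-z3))%C with
    ((z1*z1+z1*z2+z2*z2 + A*(z1+z2) + B) - (z1*z1+z1*z3+z3*z3 + A*(z1+z3) + B))%C by ring.
   rewrite G12, G13. ring. }
 assert (S2 : (z1*z2+z2*z3+z3*z1 - B = 0)%C).
 { replace (z1*z2+z2*z3+z3*z1 - B)%C with
    (-(z1*z1+z1*z2+z2*z2 + A*(z1+z2) + B) + (z1+z2)*(z1+z2+z3 + A))%C by ring.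
   rewrite G12, S1. ring. }
 assert (S3 : (z1*z2*z3 + D = 0)%C).
 { replace (z1*z2*z3 + D)%C with
    ((z1*z1*z1 + A*(z1*z1) + B*z1 + D) - (z1*z1)*(z1+z2+z3 + A) + z1*(z1*z2+z2*z3+z3*z1 - B))%C by ring.
   rewrite c1, S1, S2. ring. }
 repeat split.
 - replace (z1+z2+z3)%C with (z1+z2+z3 + A - A)%C by ring. rewrite S1. ring.
 - replace (z1*z2+z2*z3+z3*z1)%C with (z1*z2+z2*z3+z3*z1 - B + B)%C by ring. rewrite S2. ring.
 - replace (z1*z2*z3)%C with (z1*z2*z3 + D - D)%C by ring. rewrite S3. ring.
Qed.

Lemma bridge_m x1 y1 x2 y2 : x1*x1+y1*y1 = 1 -> x2*x2+y2*y2 = 1 ->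
  RtoC (1 - x1*x2 - y1*y2) = (1 - ((x1,y1)/(x2,y2) + (x2,y2)/(x1,y1))/2)%C.
Proof. intros H1 H2. unfold Cdiv. rewrite (unit_inv _ _ H1), (unit_inv _ _ H2).
 apply injective_projections; simpl; field. Qed.

Lemma prod_unit (z1 z2 z3 : C) : fst z1 * fst z1 + snd z1 * snd z1 = 1 -> fst z2 * fst z2 + snd z2 * snd z2 = 1 ->
  fst z3 * fst z3 + snd z3 * snd z3 = 1 ->
  fst (z1*z2*z3)%C * fst (z1*z2*z3)%C + snd (z1*z2*z3)%C * snd (z1*z2*z3)%C = 1.
Proof. destruct z1 as [x1 y1], z2 as [x2 y2], z3 as [x3 y3]. simpl. intros. nsatz. Qed.

Lemma X10sum (p x1 y1 x2 y2 x3 y3 : R) :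
  x1*x1+y1*y1 = 1 -> x2*x2+y2*y2 = 1 -> x3*x3+y3*y3 = 1 ->
  let z1 := ((x1,y1):C) in let z2 := ((x2,y2):C) in let z3 := ((x3,y3):C) in
  (z1+z2+z3 = -p*(z1*z2*z3))%C -> (z1*z2+z2*z3+z3*z1 = -p)%C ->
  let w1 := (1 - x1*x2 - y1*y2) + (1 - x1*x3 - y1*y3) in
  let w2 := (1 - x1*x2 - y1*y2) + (1 - x2*x3 - y2*y3) in
  let w3 := (1 - x1*x3 - y1*y3) + (1 - x2*x3 - y2*y3) in
  let C0 := fst (z1*z2*z3)%C in let S0 := snd (z1*z2*z3)%C in
  w1*x1 + w2*x2 + w3*x3 = (p^3 - 3*p + 2*p^2)*C0/2 /\
  w1*y1 + w2*y2 + w3*y3 = (p^3 - 3*p - 2*p^2)*S0/2 /\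
  w1 + w2 + w3 = 9 - p^2.
Proof. intros H1 H2 H3 z1 z2 z3 s1 s2 w1 w2 w3 C0 S0.
 assert (n1 := unit_nz _ _ H1). assert (n2 := unit_nz _ _ H2). assert (n3 := unit_nz _ _ H3).
 fold z1 in n1. fold z2 in n2. fold z3 in n3.
 assert (Hs : C0*C0 + S0*S0 = 1) by (apply prod_unit; simpl; auto).
 assert (Es : (z1*z2*z3)%C = (C0,S0)) by (unfold C0, S0; destruct (z1*z2*z3)%C; reflexivity).
 assert (ns : ((C0,S0):C) <> 0%C) by (apply unit_nz; auto).
 assert (Ei : Cinv (C0,S0) = (C0,-S0)) by (apply unit_inv; auto).
 assert (m12 := bridge_m _ _ _ _ H1 H2). assert (m13 := bridge_m _ _ _ _ H1 H3). assert (m23 := bridge_m _ _ _ _ H2 H3).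
 fold z1 z2 z3 in m12, m13, m23.
 assert (EN : (RtoC w1 * z1 + RtoC w2 * z2 + RtoC w3 * z3 =
   3/2*(z1+z2+z3) - 1/2*((z1*z2+z2*z3+z3*z1)/(z1*z2*z3))*((z1+z2+z3)*(z1+z2+z3) - 2*(z1*z2+z2*z3+z3*z1)))%C).
 { unfold w1, w2, w3. rewrite !RtoC_plus, m12, m13, m23. field. auto. }
 assert (EW : (RtoC (w1 + w2 + w3) = 9 - (z1+z2+z3)*((z1*z2+z2*z3+z3*z1)/(z1*z2*z3)))%C).
 { unfold w1, w2, w3. rewrite !RtoC_plus, m12, m13, m23. field. auto. }
 rewrite s1, s2, Es in EN, EW. unfold Cdiv in EN, EW. rewrite Ei in EN, EW.
 assert (fN := f_equal fst EN). assert (sN := f_equal snd EN). assert (fW := f_equal fst EW).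
 unfold z1, z2, z3 in fN, sN. simpl in fN, sN, fW.
 assert (e1: 2 / (2 * (2 * 1) + 0 * (0 * 1)) = /2) by field.
 assert (e0: - 0 / (2 * (2 * 1) + 0 * (0 * 1)) = 0) by field.
 rewrite e1, e0 in fN, sN.
 clearbody w1 w2 w3 C0 S0.
 unfold Rdiv. set (h := /2) in *. assert (Hh : 2*h = 1) by (unfold h; field). clearbody h.
 clear e1 e0 m12 m13 m23 EN EW Ei Es ns n1 n2 n3 s1 s2. repeat split; nsatz'.
Qed.

End Cx.

Module Cx2.
From Coquelicot Require Import Coquelicot.
Open Scope R_scope.

Definition TP (a b x1 y1 x2 y2 x3 y3 K C0 S0 : R) : Prop :=
  x1*x1+y1*y1 = 1 /\ x2*x2+y2*y2 = 1 /\ x3*x3+y3*y3 = 1 /\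
  0 < (x1-x2)^2+(y1-y2)^2 /\ 0 < (x1-x3)^2+(y1-y3)^2 /\ 0 < (x2-x3)^2+(y2-y3)^2 /\
  0 < K /\ K^2*(a^2-b^2) = p0 a b /\
  Defs.dist (a*x1,b*y1) (a*x2,b*y2) = (1 - x1*x2 - y1*y2)/K /\
  Defs.dist (a*x1,b*y1) (a*x3,b*y3) = (1 - x1*x3 - y1*y3)/K /\
  Defs.dist (a*x2,b*y2) (a*x3,b*y3) = (1 - x2*x3 - y2*y3)/K /\
  (((x1,y1):C)+(x2,y2)+(x3,y3) = -(p0 a b)*(((x1,y1):C)*(x2,y2)*(x3,y3)))%C /\
  (((x1,y1):C)*(x2,y2)+((x2,y2):C)*(x3,y3)+((x3,y3):C)*(x1,y1) = -(p0 a b))%C /\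
  (((x1,y1):C)*(x2,y2)*(x3,y3))%C = (C0,S0).

Lemma m_pos x1 y1 x2 y2 : x1*x1+y1*y1 = 1 -> x2*x2+y2*y2 = 1 -> 0 < (x1-x2)^2+(y1-y2)^2 ->
  0 < 1 - x1*x2 - y1*y2.
Proof. intros. nra. Qed.

Lemma TP_unit a b x1 y1 x2 y2 x3 y3 K C0 S0 : TP a b x1 y1 x2 y2 x3 y3 K C0 S0 -> C0*C0+S0*S0 = 1.
Proof. intros (h1&h2&h3&_&_&_&_&_&_&_&_&_&_&hs).
 generalize (Cx.prod_unit (x1,y1) (x2,y2) (x3,y3) h1 h2 h3). rewrite hs. simpl. auto. Qed.

Definition al10 (p : R) := (p^3 - 3*p + 2*p^2)/(2*(9-p^2)).
Definition be10 (p : R) := (p^3 - 3*p - 2*p^2)/(2*(9-p^2)).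

Lemma center10 a b x1 y1 x2 y2 x3 y3 K C0 S0 : 0 < b -> b < a ->
  TP a b x1 y1 x2 y2 x3 y3 K C0 S0 ->
  center_defined h10 h10_dom (a*x1,b*y1) (a*x2,b*y2) (a*x3,b*y3) /\
  center h10 (a*x1,b*y1) (a*x2,b*y2) (a*x3,b*y3) = (a*(al10 (p0 a b)*C0), b*(be10 (p0 a b)*S0)).
Proof. intros hb hab H. generalize H. intros (h1&h2&h3&d12&d13&d23&hK&hKp&e12&e13&e23&s1&s2&hs).
 assert (pb := p0_bounds a b hb hab).
 set (p := p0 a b) in *.
 assert (m12 := m_pos _ _ _ _ h1 h2 d12). assert (m13 := m_pos _ _ _ _ h1 h3 d13). assert (m23 := m_pos _ _ _ _ h2 h3 d23).
 assert (X := Cx.X10sum p x1 y1 x2 y2 x3 y3 h1 h2 h3 s1 s2). cbv zeta in X. rewrite hs in X. simpl fst in X. simpl snd in X.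
 destruct X as (X1&X2&X3).
 unfold center_defined, center, h10, h10_dom. cbv zeta.
 rewrite (ddist_sym (a*x3,b*y3) (a*x1,b*y1)). rewrite e12, e13, e23. simpl.
 set (m12' := 1 - x1*x2 - y1*y2) in *. set (m13' := 1 - x1*x3 - y1*y3) in *. set (m23' := 1 - x2*x3 - y2*y3) in *.
 assert (hm12 : m12'/K <> 0) by (apply Rgt_not_eq; apply Rdiv_lt_0_compat; lra).
 assert (hm13 : m13'/K <> 0) by (apply Rgt_not_eq; apply Rdiv_lt_0_compat; lra).
 assert (hm23 : m23'/K <> 0) by (apply Rgt_not_eq; apply Rdiv_lt_0_compat; lra).
 split.
 - repeat split; auto.
   replace ((m13' / K + m12' / K) / (m23' / K) * (m23' / K) + (m12' / K + m23' / K) / (m13' / K) * (m13' / K) +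
     (m23' / K + m13' / K) / (m12' / K) * (m12' / K)) with (2*(m12'+m13'+m23')/K) by (field; lra).
   apply Rgt_not_eq. apply Rdiv_lt_0_compat; lra.
 - assert (W : (m13' / K + m12' / K) / (m23' / K) * (m23' / K) + (m12' / K + m23' / K) / (m13' / K) * (m13' / K) +
     (m23' / K + m13' / K) / (m12' / K) * (m12' / K) = (9 - p^2)/K).
   { rewrite <- X3. field. lra. }
   rewrite W. unfold al10, be10. f_equal.
   + replace ((m13' / K + m12' / K) / (m23' / K) * (m23' / K) * (a * x1) +
      (m12' / K + m23' / K) / (m13' / K) * (m13' / K) * (a * x2) +
      (m23' / K + m13' / K) / (m12' / K) * (m12' / K) * (a * x3)) with
      (a/K * ((m12' + m13') * x1 + (m12' + m23') * x2 + (m13' + m23') * x3)) by (field; lra).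
     rewrite X1. field. split; [lra|]. nra.
   + replace ((m13' / K + m12' / K) / (m23' / K) * (m23' / K) * (b * y1) +
      (m12' / K + m23' / K) / (m13' / K) * (m13' / K) * (b * y2) +
      (m23' / K + m13' / K) / (m12' / K) * (m12' / K) * (b * y3)) with
      (b/K * ((m12' + m13') * y1 + (m12' + m23') * y2 + (m13' + m23') * y3)) by (field; lra).
     rewrite X2. field. split; [lra|]. nra.
Qed.
End Cx2.

Lemma ortho x1 y1 x2 y2 x3 y3 p C S :
  x1*x1+y1*y1=1 -> x2*x2+y2*y2=1 -> x3*x3+y3*y3=1 ->
  (1 - p*(x1*x1-y1*y1))*(x2*x3-y2*y3) - (-2*p*x1*y1)*(x2*y3+y2*x3) = x1*x1-y1*y1-p ->
  (1 - p*(x1*x1-y1*y1))*(x2*y3+y2*x3) + (-2*p*x1*y1)*(x2*x3-y2*y3) = 2*x1*y1 ->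
  C = x1*(x2*x3-y2*y3) - y1*(x2*y3+y2*x3) ->
  S = x1*(x2*y3+y2*x3) + y1*(x2*x3-y2*y3) ->
  ((p*p-5)*p*C - (3-p)*(1+p)*x1)*(x2-x3) + ((p*p-5)*p*S - (3+p)*(1-p)*y1)*(y2-y3) = 0.
Proof. intros. subst C S. nsatz. Qed.

Definition A4 (p : R) := p*(p^2-5)/((1+p)*(3-p)).
Definition B4 (p : R) := p*(p^2-5)/((1-p)*(3+p)).

Lemma on_E10 a b C0 S0 : 0 < b -> b < a -> C0*C0+S0*S0 = 1 ->
  on_ellipse (k10 a b / a) (k10 a b / b) (a*(Cx2.al10 (p0 a b)*C0), b*(Cx2.be10 (p0 a b)*S0)).
Proof. intros hb hab hs. unfold on_ellipse. cbn [fst snd].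
 assert (pb := p0_bounds a b hb hab). assert (A2 := a2_eq a b hb hab). assert (B2 := b2_eq a b hb hab).
 assert (hc := c2_pos a b hb hab). assert (hk := k10_eq a b hb hab).
 set (p := p0 a b) in *. set (c2 := a^2-b^2) in *. set (k := k10 a b) in *.
 assert (ha : a <> 0) by lra. assert (hb' : b <> 0) by lra.
 assert (hk0 : k <> 0). { rewrite hk. apply Rgt_not_eq. apply Rdiv_lt_0_compat; [|lra]. apply Rmult_lt_0_compat; nra. }
 replace ((a * (Cx2.al10 p * C0)) ^ 2 / (k / a) ^ 2) with ((a^2)^2 * Cx2.al10 p ^2 * C0^2 / k^2) by (field; auto).
 replace ((b * (Cx2.be10 p * S0)) ^ 2 / (k / b) ^ 2) with ((b^2)^2 * Cx2.be10 p ^2 * S0^2 / k^2) by (field; auto).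
 assert (A2' : a^2 = c2*(3-p)*(1+p)/(4*p)) by (rewrite <- A2; field; lra).
 assert (B2' : b^2 = c2*(3+p)*(1-p)/(4*p)) by (rewrite <- B2; field; lra).
 rewrite A2', B2'.
 rewrite hk. unfold Cx2.al10, Cx2.be10.
 transitivity (C0*C0+S0*S0); [|exact hs]. field. repeat split; try lra; nra.
Qed.

Lemma mul_neq0 r1 r2 : r1*r2 <> 0 -> r1 <> 0 /\ r2 <> 0.
Proof. intros H; split; intro E; apply H; rewrite E; ring. Qed.

Lemma alt_center4 x1 y1 x2 y2 x3 y3 :
  center_defined h4 h4_dom (x1,y1) (x2,y2) (x3,y3) ->
  let c := center h4 (x1,y1) (x2,y2) (x3,y3) in
  (fst c - x1)*(x2 - x3) + (snd c - y1)*(y2 - y3) = 0 /\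
  (fst c - x2)*(x3 - x1) + (snd c - y2)*(y3 - y1) = 0.
Proof. unfold center_defined, center, h4, h4_dom. cbv zeta. cbn [fst snd].
 set (s1 := Defs.dist (x2,y2) (x3,y3)). set (s2 := Defs.dist (x3,y3) (x1,y1)). set (s3 := Defs.dist (x1,y1) (x2,y2)).
 assert (e1 : s1^2 = (x2-x3)^2+(y2-y3)^2) by (unfold s1; rewrite ddist_sq; reflexivity).
 assert (e2 : s2^2 = (x3-x1)^2+(y3-y1)^2) by (unfold s2; rewrite ddist_sq; reflexivity).
 assert (e3 : s3^2 = (x1-x2)^2+(y1-y2)^2) by (unfold s3; rewrite ddist_sq; reflexivity).
 rewrite e1, e2, e3. clearbody s1 s2 s3. intros (d1 & d2 & d3 & w).
 set (D1 := (x3 - x1) ^ 2 + (y3 - y1) ^ 2 + ((x1 - x2) ^ 2 + (y1 - y2) ^ 2) - ((x2 - x3) ^ 2 + (y2 - y3) ^ 2)) in *.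
 set (D2 := (x1 - x2) ^ 2 + (y1 - y2) ^ 2 + ((x2 - x3) ^ 2 + (y2 - y3) ^ 2) - ((x3 - x1) ^ 2 + (y3 - y1) ^ 2)) in *.
 set (D3 := (x2 - x3) ^ 2 + (y2 - y3) ^ 2 + ((x3 - x1) ^ 2 + (y3 - y1) ^ 2) - ((x1 - x2) ^ 2 + (y1 - y2) ^ 2)) in *.
 apply mul_neq0 in d1. destruct d1 as [n1 dd1].
 apply mul_neq0 in d2. destruct d2 as [n2 dd2].
 apply mul_neq0 in d3. destruct d3 as [n3 dd3].
 assert (W : D2*D3 + D1*D3 + D1*D2 <> 0).
 { intro E. apply w. replace (1 / (s1 * D1) * s1 + 1 / (s2 * D2) * s2 + 1 / (s3 * D3) * s3) with
     ((D2*D3 + D1*D3 + D1*D2)/(D1*D2*D3)) by (field; repeat split; auto). rewrite E. unfold Rdiv. ring. }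
 subst D1 D2 D3. split; field; repeat split; auto.
 all: intro E; apply W; rewrite <- E; ring.
Qed.

Lemma alt_unique x1 y1 x2 y2 x3 y3 u1 u2 v1 v2 :
  (x2-x1)*(y3-y1) - (y2-y1)*(x3-x1) <> 0 ->
  (u1 - x1)*(x2 - x3) + (u2 - y1)*(y2 - y3) = 0 ->
  (u1 - x2)*(x3 - x1) + (u2 - y2)*(y3 - y1) = 0 ->
  (v1 - x1)*(x2 - x3) + (v2 - y1)*(y2 - y3) = 0 ->
  (v1 - x2)*(x3 - x1) + (v2 - y2)*(y3 - y1) = 0 ->
  u1 = v1 /\ u2 = v2.
Proof. intros hc h1 h2 h3 h4.
 assert (E1 : (u1 - v1) * ((x2-x1)*(y3-y1) - (y2-y1)*(x3-x1)) = 0).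
 { replace ((u1 - v1) * ((x2-x1)*(y3-y1) - (y2-y1)*(x3-x1))) with
     ((y3-y1)*(((u1 - x1)*(x2 - x3) + (u2 - y1)*(y2 - y3)) - ((v1 - x1)*(x2 - x3) + (v2 - y1)*(y2 - y3)))
      - (y2-y3)*(((u1 - x2)*(x3 - x1) + (u2 - y2)*(y3 - y1)) - ((v1 - x2)*(x3 - x1) + (v2 - y2)*(y3 - y1)))) by ring.
   rewrite h1, h2, h3, h4. ring. }
 assert (E2 : (u2 - v2) * ((x2-x1)*(y3-y1) - (y2-y1)*(x3-x1)) = 0).
 { replace ((u2 - v2) * ((x2-x1)*(y3-y1) - (y2-y1)*(x3-x1))) with
     (-(x3-x1)*(((u1 - x1)*(x2 - x3) + (u2 - y1)*(y2 - y3)) - ((v1 - x1)*(x2 - x3) + (v2 - y1)*(y2 - y3)))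
      + (x2-x3)*(((u1 - x2)*(x3 - x1) + (u2 - y2)*(y3 - y1)) - ((v1 - x2)*(x3 - x1) + (v2 - y2)*(y3 - y1)))) by ring.
   rewrite h1, h2, h3, h4. ring. }
 apply Rmult_integral in E1. apply Rmult_integral in E2.
 destruct E1; [|contradiction]. destruct E2; [|contradiction]. split; lra. Qed.

Lemma circ_cross x1 y1 x2 y2 x3 y3 :
  x1*x1+y1*y1 = 1 -> x2*x2+y2*y2 = 1 -> x3*x3+y3*y3 = 1 ->
  4*((x2-x1)*(y3-y1) - (y2-y1)*(x3-x1))^2 = ((x1-x2)^2+(y1-y2)^2)*((x1-x3)^2+(y1-y3)^2)*((x2-x3)^2+(y2-y3)^2).
Proof. intros. nsatz'. Qed.

Lemma D_sum x1 y1 x2 y2 x3 y3 :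
  let d12 := (x1-x2)^2+(y1-y2)^2 in let d13 := (x3-x1)^2+(y3-y1)^2 in let d23 := (x2-x3)^2+(y2-y3)^2 in
  let D1 := d13 + d12 - d23 in let D2 := d12 + d23 - d13 in let D3 := d23 + d13 - d12 in
  D2*D3 + D1*D3 + D1*D2 = 4*((x2-x1)*(y3-y1) - (y2-y1)*(x3-x1))^2.
Proof. intros. unfold D1, D2, D3, d12, d13, d23. ring. Qed.

Lemma center4_defined x1 y1 x2 y2 x3 y3 :
  (x2-x1)*(y3-y1) - (y2-y1)*(x3-x1) <> 0 ->
  let s1 := Defs.dist (x2,y2) (x3,y3) in let s2 := Defs.dist (x3,y3) (x1,y1) in let s3 := Defs.dist (x1,y1) (x2,y2) in
  s2^2 + s3^2 - s1^2 <> 0 -> s3^2 + s1^2 - s2^2 <> 0 -> s1^2 + s2^2 - s3^2 <> 0 ->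
  center_defined h4 h4_dom (x1,y1) (x2,y2) (x3,y3).
Proof. intros hc s1 s2 s3 D1 D2 D3.
 assert (e1 : s1^2 = (x2-x3)^2+(y2-y3)^2) by (unfold s1; rewrite ddist_sq; reflexivity).
 assert (e2 : s2^2 = (x3-x1)^2+(y3-y1)^2) by (unfold s2; rewrite ddist_sq; reflexivity).
 assert (e3 : s3^2 = (x1-x2)^2+(y1-y2)^2) by (unfold s3; rewrite ddist_sq; reflexivity).
 assert (n1 : s1 <> 0). { intro E. apply hc. assert (E' : s1^2 = 0) by (rewrite E; ring). rewrite e1 in E'.
   destruct (sq_sum0 _ _ E'). assert (x2 = x3) by lra. assert (y2 = y3) by lra. subst. ring. }
 assert (n2 : s2 <> 0). { intro E. apply hc. assert (E' : s2^2 = 0) by (rewrite E; ring). rewrite e2 in E'.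
   destruct (sq_sum0 _ _ E'). assert (x3 = x1) by lra. assert (y3 = y1) by lra. subst. ring. }
 assert (n3 : s3 <> 0). { intro E. apply hc. assert (E' : s3^2 = 0) by (rewrite E; ring). rewrite e3 in E'.
   destruct (sq_sum0 _ _ E'). assert (x1 = x2) by lra. assert (y1 = y2) by lra. subst. ring. }
 unfold center_defined, h4, h4_dom. cbv zeta. fold s1 s2 s3.
 repeat split. all: try (apply Rmult_integral_contrapositive; split; auto).
 replace (1 / (s1 * (s2 ^ 2 + s3 ^ 2 - s1 ^ 2)) * s1 + 1 / (s2 * (s3 ^ 2 + s1 ^ 2 - s2 ^ 2)) * s2 +
   1 / (s3 * (s1 ^ 2 + s2 ^ 2 - s3 ^ 2)) * s3) with
   (((s3 ^ 2 + s1 ^ 2 - s2 ^ 2)*(s1 ^ 2 + s2 ^ 2 - s3 ^ 2) + (s2 ^ 2 + s3 ^ 2 - s1 ^ 2)*(s1 ^ 2 + s2 ^ 2 - s3 ^ 2)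
     + (s2 ^ 2 + s3 ^ 2 - s1 ^ 2)*(s3 ^ 2 + s1 ^ 2 - s2 ^ 2)) /
    ((s2 ^ 2 + s3 ^ 2 - s1 ^ 2)*(s3 ^ 2 + s1 ^ 2 - s2 ^ 2)*(s1 ^ 2 + s2 ^ 2 - s3 ^ 2))) by (field; repeat split; auto).
 rewrite e1, e2, e3. generalize (D_sum x1 y1 x2 y2 x3 y3). cbv zeta. intros ->.
 unfold Rdiv. apply Rmult_integral_contrapositive. split.
 - apply Rmult_integral_contrapositive. split; [lra|]. apply pow_nonzero. auto.
 - apply Rinv_neq_0_compat. rewrite <- e1, <- e2, <- e3. apply Rmult_integral_contrapositive; split; auto.
Qed.

Module Cx3.
From Coquelicot Require Import Coquelicot.
Open Scope R_scope.
Import Cx2.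

Lemma TP_cross a b x1 y1 x2 y2 x3 y3 K C0 S0 : 0 < b -> b < a -> TP a b x1 y1 x2 y2 x3 y3 K C0 S0 ->
  (a*x2-a*x1)*(b*y3-b*y1) - (b*y2-b*y1)*(a*x3-a*x1) <> 0.
Proof. intros hb hab (h1&h2&h3&d12&d13&d23&_).
 replace ((a*x2-a*x1)*(b*y3-b*y1) - (b*y2-b*y1)*(a*x3-a*x1)) with (a*b*((x2-x1)*(y3-y1) - (y2-y1)*(x3-x1))) by ring.
 apply Rmult_integral_contrapositive. split; [apply Rmult_integral_contrapositive; split; lra|].
 intro E. assert (F := circ_cross _ _ _ _ _ _ h1 h2 h3). rewrite E in F.
 assert (0 < ((x1 - x2) ^ 2 + (y1 - y2) ^ 2) * ((x1 - x3) ^ 2 + (y1 - y3) ^ 2) * ((x2 - x3) ^ 2 + (y2 - y3) ^ 2)).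
 { apply Rmult_lt_0_compat; [apply Rmult_lt_0_compat|]; auto. }
 lra. Qed.

Lemma TP_vert a b x1 y1 x2 y2 x3 y3 K C0 S0 : TP a b x1 y1 x2 y2 x3 y3 K C0 S0 ->
  let p := p0 a b in
  (1 - p*(x1*x1-y1*y1))*(x2*x3-y2*y3) - (-2*p*x1*y1)*(x2*y3+y2*x3) = x1*x1-y1*y1-p /\
  (1 - p*(x1*x1-y1*y1))*(x2*y3+y2*x3) + (-2*p*x1*y1)*(x2*x3-y2*y3) = 2*x1*y1 /\
  (1 - p*(x2*x2-y2*y2))*(x3*x1-y3*y1) - (-2*p*x2*y2)*(x3*y1+y3*x1) = x2*x2-y2*y2-p /\
  (1 - p*(x2*x2-y2*y2))*(x3*y1+y3*x1) + (-2*p*x2*y2)*(x3*x1-y3*y1) = 2*x2*y2 /\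
  C0 = x1*(x2*x3-y2*y3) - y1*(x2*y3+y2*x3) /\
  S0 = x1*(x2*y3+y2*x3) + y1*(x2*x3-y2*y3) /\
  C0 = x2*(x3*x1-y3*y1) - y2*(x3*y1+y3*x1) /\
  S0 = x2*(x3*y1+y3*x1) + y2*(x3*x1-y3*y1).
Proof. intros (h1&h2&h3&d12&d13&d23&hK&hKp&e12&e13&e23&s1&s2&hs) p.
 fold p in s1, s2.
 assert (n1 := Cx.unit_nz _ _ h1). assert (n2 := Cx.unit_nz _ _ h2).
 assert (V1 := Cx.vertex_from_sigma p (x1,y1) (x2,y2) (x3,y3) n1 s1 s2).
 assert (s1' : (((x2,y2):C) + (x3,y3) + (x1,y1) = -p*(((x2,y2):C)*(x3,y3)*(x1,y1)))%C).
 { replace (((x2,y2):C) + (x3,y3) + (x1,y1))%C with (((x1,y1):C)+(x2,y2)+(x3,y3))%C by ring. rewrite s1. ring. }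
 assert (s2' : (((x2,y2):C)*(x3,y3)+((x3,y3):C)*(x1,y1)+((x1,y1):C)*(x2,y2) = -p)%C).
 { rewrite <- s2. ring. }
 assert (V2 := Cx.vertex_from_sigma p (x2,y2) (x3,y3) (x1,y1) n2 s1' s2').
 assert (f1 := f_equal fst V1). assert (g1 := f_equal snd V1).
 assert (f2 := f_equal fst V2). assert (g2 := f_equal snd V2).
 assert (fs := f_equal fst hs). assert (gs := f_equal snd hs).
 simpl in f1, g1, f2, g2, fs, gs.
 repeat split; [lra|lra|lra|lra| | | | ]; [rewrite <- fs| rewrite <- gs | rewrite <- fs | rewrite <- gs]; ring.
Qed.

Lemma Y4_alt a b x1 y1 x2 y2 x3 y3 K C0 S0 : 0 < b -> b < a -> TP a b x1 y1 x2 y2 x3 y3 K C0 S0 ->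
  let p := p0 a b in
  (a*(A4 p*C0) - a*x1)*(a*x2 - a*x3) + (b*(B4 p*S0) - b*y1)*(b*y2 - b*y3) = 0 /\
  (a*(A4 p*C0) - a*x2)*(a*x3 - a*x1) + (b*(B4 p*S0) - b*y2)*(b*y3 - b*y1) = 0.
Proof. intros hb hab H p. generalize H. intros (h1&h2&h3&_).
 destruct (TP_vert _ _ _ _ _ _ _ _ _ _ _ H) as (v1&v2&v3&v4&c1&c2&c3&c4). fold p in v1, v2, v3, v4.
 assert (pb := p0_bounds a b hb hab). assert (A2 := a2_eq a b hb hab). assert (B2 := b2_eq a b hb hab).
 fold p in pb, A2, B2.
 assert (O1 := ortho _ _ _ _ _ _ p _ _ h1 h2 h3 v1 v2 c1 c2).
 assert (O2 := ortho _ _ _ _ _ _ p _ _ h2 h3 h1 v3 v4 c3 c4).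
 set (c2' := a^2-b^2) in *.
 assert (A2' : a^2 = c2'*(3-p)*(1+p)/(4*p)) by (rewrite <- A2; field; lra).
 assert (B2' : b^2 = c2'*(3+p)*(1-p)/(4*p)) by (rewrite <- B2; field; lra).
 split.
 - replace ((a*(A4 p*C0) - a*x1)*(a*x2 - a*x3) + (b*(B4 p*S0) - b*y1)*(b*y2 - b*y3)) with
     (a^2*(A4 p*C0 - x1)*(x2 - x3) + b^2*(B4 p*S0 - y1)*(y2-y3)) by ring.
   rewrite A2', B2'. unfold A4, B4.
   replace 0 with (c2'/(4*p) * 0) by ring. rewrite <- O1. field. repeat split; lra.
 - replace ((a*(A4 p*C0) - a*x2)*(a*x3 - a*x1) + (b*(B4 p*S0) - b*y2)*(b*y3 - b*y1)) with
     (a^2*(A4 p*C0 - x2)*(x3 - x1) + b^2*(B4 p*S0 - y2)*(y3-y1)) by ring.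
   rewrite A2', B2'. unfold A4, B4.
   replace 0 with (c2'/(4*p) * 0) by ring. rewrite <- O2. field. repeat split; lra.
Qed.

Lemma center4 a b x1 y1 x2 y2 x3 y3 K C0 S0 : 0 < b -> b < a -> TP a b x1 y1 x2 y2 x3 y3 K C0 S0 ->
  center_defined h4 h4_dom (a*x1,b*y1) (a*x2,b*y2) (a*x3,b*y3) ->
  center h4 (a*x1,b*y1) (a*x2,b*y2) (a*x3,b*y3) = (a*(A4 (p0 a b)*C0), b*(B4 (p0 a b)*S0)).
Proof. intros hb hab H hd.
 destruct (alt_center4 _ _ _ _ _ _ hd) as [c1 c2].
 destruct (Y4_alt _ _ _ _ _ _ _ _ _ _ _ hb hab H) as [y1' y2'].
 assert (hc := TP_cross _ _ _ _ _ _ _ _ _ _ _ hb hab H).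
 set (c := center h4 (a*x1,b*y1) (a*x2,b*y2) (a*x3,b*y3)) in *.
 destruct (alt_unique _ _ _ _ _ _ _ _ _ _ hc c1 c2 y1' y2') as [E1 E2].
 rewrite (surjective_pairing c), E1, E2. reflexivity. Qed.

Lemma right4 a b x1 y1 x2 y2 x3 y3 K C0 S0 : 0 < b -> b < a -> TP a b x1 y1 x2 y2 x3 y3 K C0 S0 ->
  ~ center_defined h4 h4_dom (a*x1,b*y1) (a*x2,b*y2) (a*x3,b*y3) ->
  (A4 (p0 a b)*C0)^2 + (B4 (p0 a b)*S0)^2 = 1.
Proof. intros hb hab H hn. generalize H. intros (h1&h2&h3&_).
 destruct (Y4_alt _ _ _ _ _ _ _ _ _ _ _ hb hab H) as [y1' y2'].
 assert (hc := TP_cross _ _ _ _ _ _ _ _ _ _ _ hb hab H).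
 set (X1 := a*x1) in *. set (X2 := a*x2) in *. set (X3 := a*x3) in *.
 set (Y1 := b*y1) in *. set (Y2 := b*y2) in *. set (Y3 := b*y3) in *.
 assert (e1 : Defs.dist (X2,Y2) (X3,Y3) ^2 = (X2-X3)^2+(Y2-Y3)^2) by (rewrite ddist_sq; reflexivity).
 assert (e2 : Defs.dist (X3,Y3) (X1,Y1) ^2 = (X3-X1)^2+(Y3-Y1)^2) by (rewrite ddist_sq; reflexivity).
 assert (e3 : Defs.dist (X1,Y1) (X2,Y2) ^2 = (X1-X2)^2+(Y1-Y2)^2) by (rewrite ddist_sq; reflexivity).
 assert (ha : a <> 0) by lra. assert (hb' : b <> 0) by lra.
 assert (fin : forall u v, a*(A4 (p0 a b)*C0) = a*u -> b*(B4 (p0 a b)*S0) = b*v -> u*u+v*v = 1 ->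
   (A4 (p0 a b)*C0)^2 + (B4 (p0 a b)*S0)^2 = 1).
 { intros u v E1 E2 E3. apply Rmult_eq_reg_l in E1; auto. apply Rmult_eq_reg_l in E2; auto.
   rewrite E1, E2. lra. }
 destruct (Req_dec (Defs.dist (X3,Y3) (X1,Y1) ^2 + Defs.dist (X1,Y1) (X2,Y2) ^2 - Defs.dist (X2,Y2) (X3,Y3) ^2) 0) as [D1|D1].
 { rewrite e1, e2, e3 in D1.
   destruct (alt_unique _ _ _ _ _ _ _ _ X1 Y1 hc y1' y2') as [E1 E2]; [ring| nra |].
   apply (fin x1 y1); auto. }
 destruct (Req_dec (Defs.dist (X1,Y1) (X2,Y2) ^2 + Defs.dist (X2,Y2) (X3,Y3) ^2 - Defs.dist (X3,Y3) (X1,Y1) ^2) 0) as [D2|D2].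
 { rewrite e1, e2, e3 in D2.
   destruct (alt_unique _ _ _ _ _ _ _ _ X2 Y2 hc y1' y2') as [E1 E2]; [nra| ring |].
   apply (fin x2 y2); auto. }
 destruct (Req_dec (Defs.dist (X2,Y2) (X3,Y3) ^2 + Defs.dist (X3,Y3) (X1,Y1) ^2 - Defs.dist (X1,Y1) (X2,Y2) ^2) 0) as [D3|D3].
 { rewrite e1, e2, e3 in D3.
   destruct (alt_unique _ _ _ _ _ _ _ _ X3 Y3 hc y1' y2') as [E1 E2]; [nra| nra |].
   apply (fin x3 y3); auto. }
 exfalso. apply hn. apply center4_defined; auto.
Qed.

Lemma on_E4 a b C0 S0 : 0 < b -> b < a -> C0*C0+S0*S0 = 1 ->
  on_ellipse (k4 a b / a) (k4 a b / b) (a*(A4 (p0 a b)*C0), b*(B4 (p0 a b)*S0)).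
Proof. intros hb hab hs. unfold on_ellipse. cbn [fst snd].
 assert (pb := p0_bounds a b hb hab). assert (A2 := a2_eq a b hb hab). assert (B2 := b2_eq a b hb hab).
 assert (hc := c2_pos a b hb hab). assert (hk := k4_eq a b hb hab).
 set (p := p0 a b) in *. set (c2 := a^2-b^2) in *. set (k := k4 a b) in *.
 assert (ha : a <> 0) by lra. assert (hb' : b <> 0) by lra.
 assert (hk0 : k <> 0). { rewrite hk. apply Rgt_not_eq. apply Rdiv_lt_0_compat; [|lra]. apply Rmult_lt_0_compat; nra. }
 replace ((a * (A4 p * C0)) ^ 2 / (k / a) ^ 2) with ((a^2)^2 * A4 p ^2 * C0^2 / k^2) by (field; auto).
 replace ((b * (B4 p * S0)) ^ 2 / (k / b) ^ 2) with ((b^2)^2 * B4 p ^2 * S0^2 / k^2) by (field; auto).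
 assert (A2' : a^2 = c2*(3-p)*(1+p)/(4*p)) by (rewrite <- A2; field; lra).
 assert (B2' : b^2 = c2*(3+p)*(1-p)/(4*p)) by (rewrite <- B2; field; lra).
 rewrite A2', B2'.
 rewrite hk. unfold A4, B4.
 transitivity (C0*C0+S0*S0); [|exact hs]. field. repeat split; try lra; nra.
Qed.
End Cx3.

Lemma joach_id x1 y1 x2 y2 a b K : x1*x1+y1*y1=1 -> x2*x2+y2*y2=1 ->
  (1 - x1*x2 - y1*y2)^2 - K^2*(a^2*(x1-x2)^2 + b^2*(y1-y2)^2) =
  - (1 - x1*x2 - y1*y2) * ((1 - K^2*(a^2-b^2))*x1*x2 + (1+K^2*(a^2-b^2))*y1*y2 - (1 - K^2*(a^2+b^2))).
Proof. intros. nsatz'. Qed.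

Lemma R_from_K x1 y1 x2 y2 a b K : x1*x1+y1*y1=1 -> x2*x2+y2*y2=1 -> 0 < 1 - x1*x2 - y1*y2 -> 0 < K ->
  Defs.dist (a*x1,b*y1) (a*x2,b*y2) = (1 - x1*x2 - y1*y2)/K ->
  (1 - K^2*(a^2-b^2))*x1*x2 + (1+K^2*(a^2-b^2))*y1*y2 - (1 - K^2*(a^2+b^2)) = 0.
Proof. intros h1 h2 hm hK hd.
 assert (E : Defs.dist (a*x1,b*y1) (a*x2,b*y2) ^ 2 = a^2*(x1-x2)^2 + b^2*(y1-y2)^2) by (rewrite ddist_sq; simpl; ring).
 rewrite hd in E. assert (J := joach_id _ _ _ _ a b K h1 h2). rewrite <- E in J.
 replace ((1 - x1 * x2 - y1 * y2) ^ 2 - K ^ 2 * ((1 - x1 * x2 - y1 * y2) / K) ^ 2) with 0 in J by (field; lra).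
 assert (Z : (1 - x1 * x2 - y1 * y2) * ((1 - K ^ 2 * (a ^ 2 - b ^ 2)) * x1 * x2 + (1 + K ^ 2 * (a ^ 2 - b ^ 2)) * y1 * y2 -
  (1 - K ^ 2 * (a ^ 2 + b ^ 2))) = 0) by lra.
 apply Rmult_integral in Z. destruct Z; [lra|auto]. Qed.

Lemma K_from_R x1 y1 x2 y2 a b K : x1*x1+y1*y1=1 -> x2*x2+y2*y2=1 -> 0 < 1 - x1*x2 - y1*y2 -> 0 < K ->
  (1 - K^2*(a^2-b^2))*x1*x2 + (1+K^2*(a^2-b^2))*y1*y2 - (1 - K^2*(a^2+b^2)) = 0 ->
  Defs.dist (a*x1,b*y1) (a*x2,b*y2) = (1 - x1*x2 - y1*y2)/K.
Proof. intros h1 h2 hm hK hR. apply ddist_eq.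
 - apply Rlt_le. apply Rdiv_lt_0_compat; auto.
 - cbn [fst snd]. assert (J := joach_id _ _ _ _ a b K h1 h2). rewrite hR in J. replace (- (1 - x1*x2 - y1*y2) * 0) with 0 in J by ring.
   apply Rmult_eq_reg_l with (K^2); [|apply pow_nonzero; lra].
   replace (K ^ 2 * ((1 - x1 * x2 - y1 * y2) / K) ^ 2) with ((1 - x1 * x2 - y1 * y2) ^ 2) by (field; lra).
   replace ((a * x1 - a * x2) ^ 2 + (b * y1 - b * y2) ^ 2) with (a^2*(x1-x2)^2 + b^2*(y1-y2)^2) by ring.
   lra. Qed.

Lemma ell_coords a b P : 0 < a -> 0 < b -> on_ellipse a b P ->
  P = (a*(fst P/a), b*(snd P/b)) /\ (fst P/a)*(fst P/a) + (snd P/b)*(snd P/b) = 1.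
Proof. intros ha hb H. unfold on_ellipse in H. split.
 - destruct P as [x y]. simpl. f_equal; field; lra.
 - rewrite <- H. field. split; lra. Qed.

Lemma p_unique a b u : 0 < b -> b < a -> 0 < u -> (a^2-b^2)*u^2 + 2*(a^2+b^2)*u - 3*(a^2-b^2) = 0 -> u = p0 a b.
Proof. intros hb hab hu H. assert (Q := p0_quad a b hb hab). assert (pb := p0_bounds a b hb hab).
 assert (hc := c2_pos a b hb hab).
 assert (Z : (u - p0 a b) * ((a^2-b^2)*(u + p0 a b) + 2*(a^2+b^2)) = 0).
 { replace ((u - p0 a b) * ((a^2-b^2)*(u + p0 a b) + 2*(a^2+b^2))) with
     (((a^2-b^2)*u^2 + 2*(a^2+b^2)*u - 3*(a^2-b^2)) - ((a^2-b^2)*p0 a b^2 + 2*(a^2+b^2)*p0 a b - 3*(a^2-b^2))) by ring.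
   rewrite H, Q. ring. }
 apply Rmult_integral in Z. destruct Z as [Z|Z]; [lra|].
 exfalso. assert (0 < (a^2-b^2)*(u + p0 a b)) by (apply Rmult_lt_0_compat; lra). nra. Qed.

Module Cx5.
From Coquelicot Require Import Coquelicot.
Open Scope R_scope.
Import Cx2.

Lemma sq_pos_of_neq x1 y1 x2 y2 : (x1 <> x2 \/ y1 <> y2) -> 0 < (x1-x2)^2+(y1-y2)^2.
Proof. intros H. destruct (Rle_lt_dec ((x1-x2)^2+(y1-y2)^2) 0) as [h|h]; auto.
 exfalso. assert (E : (x1-x2)^2+(y1-y2)^2 = 0) by (generalize (pow2_ge_0 (x1-x2)) (pow2_ge_0 (y1-y2)); lra).
 destruct (sq_sum0 _ _ E). destruct H; lra. Qed.

Lemma dist_pos_d x1 y1 x2 y2 a b : 0 < a -> 0 < b -> 0 < (x1-x2)^2+(y1-y2)^2 ->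
  0 < Defs.dist (a*x1,b*y1) (a*x2,b*y2).
Proof. intros ha hb h. apply ddist_pos. cbn [fst snd].
 replace ((a * x1 - a * x2) ^ 2 + (b * y1 - b * y2) ^ 2) with (a^2*(x1-x2)^2 + b^2*(y1-y2)^2) by ring.
 assert (A : 0 < a^2) by (apply pow_lt; auto). assert (B : 0 < b^2) by (apply pow_lt; auto).
 generalize (pow2_ge_0 (x1-x2)) (pow2_ge_0 (y1-y2)). intros X Y.
 destruct (Rle_lt_dec (a^2) (b^2)).
 - assert (a^2*(x1-x2)^2 + b^2*(y1-y2)^2 >= a^2*((x1-x2)^2+(y1-y2)^2)) by nra. nra.
 - assert (a^2*(x1-x2)^2 + b^2*(y1-y2)^2 >= b^2*((x1-x2)^2+(y1-y2)^2)) by nra. nra.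
Qed.
End Cx5.

Module Cx6.
From Coquelicot Require Import Coquelicot.
Open Scope R_scope.
Import Cx2 Cx5.

Lemma refl_step a b x1 y1 x2 y2 x3 y3 : 0 < a -> 0 < b ->
  x1*x1+y1*y1 = 1 ->
  0 < (x1-x2)^2+(y1-y2)^2 -> 0 < (x1-x3)^2+(y1-y3)^2 ->
  (a*x2-a*x1)*(b*y3-b*y1) - (b*y2-b*y1)*(a*x3-a*x1) <> 0 ->
  normal_bisects a b (a*x1,b*y1) (a*x2,b*y2) (a*x3,b*y3) ->
  (1 - x1*x2 - y1*y2) * Defs.dist (a*x3,b*y3) (a*x1,b*y1) = (1 - x1*x3 - y1*y3) * Defs.dist (a*x2,b*y2) (a*x1,b*y1).
Proof. intros ha hb h1 d12 d13 nd nb.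
 unfold normal_bisects, cross, normal_dir, bisector_dir, vsub in nb. cbn [fst snd] in nb.
 assert (p2 : 0 < Defs.dist (a*x2,b*y2) (a*x1,b*y1)) by (apply dist_pos_d; auto; nra).
 assert (p3 : 0 < Defs.dist (a*x3,b*y3) (a*x1,b*y1)) by (apply dist_pos_d; auto; nra).
 assert (R := refl_fwd (a*x1/a^2) (b*y1/b^2) (a*x2-a*x1) (b*y2-b*y1) (a*x3-a*x1) (b*y3-b*y1) _ _ p2 p3).
 rewrite !ddist_sq in R. cbn [fst snd] in R. specialize (R eq_refl eq_refl nd nb).
 assert (Ea : a * x1 / a ^ 2 * (a * x2 - a * x1) + b * y1 / b ^ 2 * (b * y2 - b * y1) = -(1 - x1*x2 - y1*y2)).
 { transitivity (x1*x2 - x1*x1 + y1*y2 - y1*y1); [field; lra| lra]. }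
 assert (Eb : a * x1 / a ^ 2 * (a * x3 - a * x1) + b * y1 / b ^ 2 * (b * y3 - b * y1) = -(1 - x1*x3 - y1*y3)).
 { transitivity (x1*x3 - x1*x1 + y1*y3 - y1*y1); [field; lra| lra]. }
 rewrite Ea, Eb in R. lra. Qed.

Lemma coords_of a b P : 0 < a -> 0 < b -> on_ellipse a b P ->
  exists x y, P = (a*x, b*y) /\ x*x+y*y = 1.
Proof. intros ha hb H. destruct (ell_coords a b P ha hb H) as [E U]. exists (fst P/a), (snd P/b). auto. Qed.

Lemma fwd a b P1 P2 P3 : 0 < b -> b < a -> three_periodic a b P1 P2 P3 ->
  exists x1 y1 x2 y2 x3 y3 K C0 S0, P1 = (a*x1,b*y1) /\ P2 = (a*x2,b*y2) /\ P3 = (a*x3,b*y3) /\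
    TP a b x1 y1 x2 y2 x3 y3 K C0 S0.
Proof. intros hb hab (nd & el1 & el2 & el3 & nb1 & nb2 & nb3).
 assert (ha : 0 < a) by lra.
 destruct (coords_of a b P1 ha hb el1) as (x1 & y1 & -> & h1).
 destruct (coords_of a b P2 ha hb el2) as (x2 & y2 & -> & h2).
 destruct (coords_of a b P3 ha hb el3) as (x3 & y3 & -> & h3).
 unfold nondegenerate, cross, vsub in nd. cbn [fst snd] in nd.
 assert (d12 : 0 < (x1-x2)^2+(y1-y2)^2).
 { apply sq_pos_of_neq. destruct (Req_dec x1 x2); [right|left; auto]. intro E. apply nd. subst. ring. }
 assert (d13 : 0 < (x1-x3)^2+(y1-y3)^2).
 { apply sq_pos_of_neq. destruct (Req_dec x1 x3); [right|left; auto]. intro E. apply nd. subst. ring. }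
 assert (d23 : 0 < (x2-x3)^2+(y2-y3)^2).
 { apply sq_pos_of_neq. destruct (Req_dec x2 x3); [right|left; auto]. intro E. apply nd. subst. ring. }
 assert (m12 := m_pos _ _ _ _ h1 h2 d12). assert (m13 := m_pos _ _ _ _ h1 h3 d13). assert (m23 := m_pos _ _ _ _ h2 h3 d23).
 assert (R1 := refl_step a b x1 y1 x2 y2 x3 y3 ha hb h1 d12 d13 nd nb1).
 assert (d21 : 0 < (x2-x1)^2+(y2-y1)^2) by nra. assert (d31 : 0 < (x3-x1)^2+(y3-y1)^2) by nra.
 assert (nd2 : (a*x3-a*x2)*(b*y1-b*y2) - (b*y3-b*y2)*(a*x1-a*x2) <> 0).
 { intro E; apply nd. rewrite <- E. ring. }
 assert (R2 := refl_step a b x2 y2 x3 y3 x1 y1 ha hb h2 d23 d21 nd2 nb2).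
 set (e12 := Defs.dist (a*x1,b*y1) (a*x2,b*y2)) in *.
 set (e13 := Defs.dist (a*x1,b*y1) (a*x3,b*y3)) in *.
 set (e23 := Defs.dist (a*x2,b*y2) (a*x3,b*y3)) in *.
 assert (p12 : 0 < e12) by (apply dist_pos_d; auto).
 assert (p13 : 0 < e13) by (apply dist_pos_d; auto).
 assert (p23 : 0 < e23) by (apply dist_pos_d; auto).
 rewrite (ddist_sym (a*x3,b*y3) (a*x1,b*y1)), (ddist_sym (a*x2,b*y2) (a*x1,b*y1)) in R1. fold e12 e13 in R1.
 rewrite (ddist_sym (a*x3,b*y3) (a*x2,b*y2)) in R2. fold e23 in R2.
 set (K := (1 - x1*x2 - y1*y2)/e12).
 assert (hK : 0 < K) by (apply Rdiv_lt_0_compat; auto).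
 assert (E12 : e12 = (1 - x1*x2 - y1*y2)/K) by (unfold K; field; lra).
 assert (E13 : e13 = (1 - x1*x3 - y1*y3)/K).
 { unfold K. apply Rmult_eq_reg_l with (1 - x1*x2 - y1*y2); [|lra]. rewrite R1. field. lra. }
 assert (E23 : e23 = (1 - x2*x3 - y2*y3)/K).
 { unfold K. apply Rmult_eq_reg_l with (1 - x1*x2 - y1*y2); [|lra].
   replace (1 - x1*x2 - y1*y2) with (1 - x2*x1 - y2*y1) by ring. rewrite <- R2.
   replace (1 - x2*x1 - y2*y1) with (1 - x1*x2 - y1*y2) by ring. field. lra. }
 assert (Q12 := R_from_K _ _ _ _ a b K h1 h2 m12 hK E12).
 assert (Q13 := R_from_K _ _ _ _ a b K h1 h3 m13 hK E13).
 assert (Q23 := R_from_K _ _ _ _ a b K h2 h3 m23 hK E23).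
 set (p := K^2*(a^2-b^2)) in *. set (q := 1 - K^2*(a^2+b^2)) in *.
 assert (B12 := Cx.bridge_Q p q _ _ _ _ h1 h2). rewrite Q12 in B12.
 assert (B13 := Cx.bridge_Q p q _ _ _ _ h1 h3). rewrite Q13 in B13.
 assert (B23 := Cx.bridge_Q p q _ _ _ _ h2 h3). rewrite Q23 in B23.
 assert (B12' : Cx.Qf p q (x1, y1) (x2, y2) = RtoC 0) by (rewrite B12; ring).
 assert (B13' : Cx.Qf p q (x1, y1) (x3, y3) = RtoC 0) by (rewrite B13; ring).
 assert (B23' : Cx.Qf p q (x2, y2) (x3, y3) = RtoC 0) by (rewrite B23; ring).
 assert (n1 := Cx.unit_nz _ _ h1).
 assert (z12 : ((x1,y1):C) <> (x2,y2)). { intro E. injection E. intros. subst. lra. }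
 assert (z13 : ((x1,y1):C) <> (x3,y3)). { intro E. injection E. intros. subst. lra. }
 assert (z23 : ((x2,y2):C) <> (x3,y3)). { intro E. injection E. intros. subst. lra. }
 destruct (Cx.fwd_rel p q _ _ _ n1 z12 z13 z23 B12' B13' B23') as (S1 & S2 & Sq).
 assert (hp : p = p0 a b).
 { apply p_unique; auto. unfold p. assert (0 < a^2-b^2) by (apply c2_pos; auto). apply Rmult_lt_0_compat; auto. apply pow_lt; auto.
   replace ((a ^ 2 - b ^ 2) * p ^ 2 + 2 * (a ^ 2 + b ^ 2) * p - 3 * (a ^ 2 - b ^ 2)) with
     ((a^2-b^2)*(p^2 - 1 - 2*q)) by (unfold p, q; ring). rewrite Sq. ring. }
 rewrite hp in S1, S2.
 exists x1, y1, x2, y2, x3, y3, K, (fst (((x1,y1):C)*(x2,y2)*(x3,y3))%C), (snd (((x1,y1):C)*(x2,y2)*(x3,y3))%C).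
 repeat split; auto.
 all: try (destruct ((((x1,y1):C)*(x2,y2)*(x3,y3))%C); reflexivity).
Qed.
End Cx6.

Definition gfun (p t r : R) := sin (3*r - t/2) + p * sin (r + t/2).

Lemma gfun_cont p t : continuity (gfun p t).
Proof. unfold gfun. reg. Qed.

Lemma gfun_at p t k : 0 < p < 1 ->
  let r := (t/2 + PI/2 + INR k * PI)/3 in
  (k = 0%nat \/ k = 2%nat -> 0 < gfun p t r) /\ (k = 1%nat \/ k = 3%nat -> gfun p t r < 0).
Proof. intros hp r. unfold gfun.
 assert (B := SIN_bound (r + t/2)).
 assert (E : 3*r - t/2 = PI/2 + INR k * PI) by (unfold r; field).
 rewrite E. split; intros [-> | ->]; simpl INR.
 - replace (PI/2 + 0*PI) with (PI/2) by ring. rewrite sin_PI2. nra.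
 - replace (PI/2 + (1+1)*PI) with (PI/2 + PI + PI) by ring. rewrite !neg_sin, sin_PI2. nra.
 - replace (PI/2 + 1*PI) with (PI/2 + PI) by ring. rewrite !neg_sin, sin_PI2. nra.
 - replace (PI/2 + (1+1+1)*PI) with (PI/2 + PI + PI + PI) by ring. rewrite !neg_sin, sin_PI2. nra.
Qed.

Lemma root_between f x y : continuity f -> x < y -> (f x < 0 /\ 0 < f y \/ 0 < f x /\ f y < 0) ->
  exists z, x < z < y /\ f z = 0.
Proof. intros hc hxy [[h1 h2]|[h1 h2]].
 - destruct (IVT f x y hc hxy h1 h2) as [z [[l r] e]]. exists z. split; auto.
   split; [destruct l; auto; subst; lra | destruct r; auto; subst; lra].
 - assert (hc' : continuity (fun r => - f r)) by (apply continuity_opp; auto).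
   destruct (IVT (fun r => - f r) x y hc' hxy) as [z [[l r] e]]; try lra.
   exists z. split; [|lra].
   split; [destruct l; auto; subst; lra | destruct r; auto; subst; lra].
Qed.

Lemma roots_exist p t : 0 < p < 1 ->
  exists r0 r1 r2, gfun p t r0 = 0 /\ gfun p t r1 = 0 /\ gfun p t r2 = 0 /\
    r0 < r1 /\ r1 < r2 /\ r2 - r0 < PI.
Proof. intros hp.
 set (q k := (t/2 + PI/2 + INR k * PI)/3).
 destruct (gfun_at p t 0 hp) as [g0 _]. destruct (gfun_at p t 1 hp) as [_ g1].
 destruct (gfun_at p t 2 hp) as [g2 _]. destruct (gfun_at p t 3 hp) as [_ g3].
 fold (q 0%nat) in g0. fold (q 1%nat) in g1. fold (q 2%nat) in g2. fold (q 3%nat) in g3.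
 specialize (g0 (or_introl eq_refl)). specialize (g1 (or_introl eq_refl)).
 specialize (g2 (or_intror eq_refl)). specialize (g3 (or_intror eq_refl)).
 assert (PIpos := PI_RGT_0).
 assert (l01 : q 0%nat < q 1%nat) by (unfold q; simpl; lra).
 assert (l12 : q 1%nat < q 2%nat) by (unfold q; simpl; lra).
 assert (l23 : q 2%nat < q 3%nat) by (unfold q; simpl; lra).
 assert (d03 : q 3%nat - q 0%nat = PI) by (unfold q; simpl; field).
 destruct (root_between _ _ _ (gfun_cont p t) l01) as [r0 [[a0 b0] e0]]; [right; auto|].
 destruct (root_between _ _ _ (gfun_cont p t) l12) as [r1 [[a1 b1] e1]]; [left; auto|].
 destruct (root_between _ _ _ (gfun_cont p t) l23) as [r2 [[a2 b2] e2]]; [right; auto|].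
 exists r0, r1, r2. repeat split; auto; lra.
Qed.

Module Cx8.
From Coquelicot Require Import Coquelicot.
Open Scope R_scope.
Import Cx2 Cx3 Cx5 Cx6.

Lemma root_cubic p t r : gfun p t r = 0 ->
  let z := ((cos (2*r), sin (2*r)) : C) in let s := ((cos t, sin t) : C) in
  (z*z*z + (p*s)*(z*z) + (-p)*z + (-s) = 0)%C.
Proof. intros g z s. unfold gfun in g.
 rewrite sin_minus in g. replace (3*r) with (2*r + r) in g by ring.
 rewrite sin_plus, cos_plus, sin_plus in g. rewrite sin_2a, cos_2a in g.
 unfold z, s. rewrite sin_2a, cos_2a. replace t with (2*(t/2)) by field. rewrite sin_2a, cos_2a.
 assert (h1 : cos r * cos r + sin r * sin r = 1) by (generalize (sin2_cos2 r); unfold Rsqr; lra).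
 assert (h2 : cos (t/2) * cos (t/2) + sin (t/2) * sin (t/2) = 1) by (generalize (sin2_cos2 (t/2)); unfold Rsqr; lra).
 set (c := cos r) in *. set (sn := sin r) in *. set (ch := cos (t/2)) in *. set (sh := sin (t/2)) in *.
 clearbody c sn ch sh.
 apply injective_projections; simpl; nsatz.
Qed.

Lemma refl_step_bwd a b x1 y1 x2 y2 x3 y3 K : 0 < a -> 0 < b -> x1*x1+y1*y1 = 1 -> 0 < K ->
  0 < (x1-x2)^2+(y1-y2)^2 -> 0 < (x1-x3)^2+(y1-y3)^2 ->
  (a*x2-a*x1)*(b*y3-b*y1) - (b*y2-b*y1)*(a*x3-a*x1) <> 0 ->
  Defs.dist (a*x1,b*y1) (a*x2,b*y2) = (1 - x1*x2 - y1*y2)/K ->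
  Defs.dist (a*x1,b*y1) (a*x3,b*y3) = (1 - x1*x3 - y1*y3)/K ->
  normal_bisects a b (a*x1,b*y1) (a*x2,b*y2) (a*x3,b*y3).
Proof. intros ha hb h1 hK d12 d13 nd e12 e13.
 unfold normal_bisects, cross, normal_dir, bisector_dir, vsub. cbn [fst snd].
 assert (p2 : 0 < Defs.dist (a*x2,b*y2) (a*x1,b*y1)) by (apply dist_pos_d; auto; nra).
 assert (p3 : 0 < Defs.dist (a*x3,b*y3) (a*x1,b*y1)) by (apply dist_pos_d; auto; nra).
 apply (refl_bwd (a*x1/a^2) (b*y1/b^2) (a*x2-a*x1) (b*y2-b*y1) (a*x3-a*x1) (b*y3-b*y1) _ _ p2 p3); auto.
 - rewrite ddist_sq. reflexivity.
 - rewrite ddist_sq. reflexivity.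
 - rewrite (ddist_sym (a*x3,b*y3)), (ddist_sym (a*x2,b*y2)), e12, e13.
   assert (Ea : a * x1 / a ^ 2 * (a * x2 - a * x1) + b * y1 / b ^ 2 * (b * y2 - b * y1) = -(1 - x1*x2 - y1*y2)).
   { transitivity (x1*x2 - x1*x1 + y1*y2 - y1*y1); [field; lra| lra]. }
   assert (Eb : a * x1 / a ^ 2 * (a * x3 - a * x1) + b * y1 / b ^ 2 * (b * y3 - b * y1) = -(1 - x1*x3 - y1*y3)).
   { transitivity (x1*x3 - x1*x1 + y1*y3 - y1*y1); [field; lra| lra]. }
   rewrite Ea, Eb. field. lra.
Qed.

Lemma circ_sep r u : 0 < u < PI ->
  0 < (cos (2*r) - cos (2*u+2*r))^2 + (sin (2*r) - sin (2*u+2*r))^2.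
Proof. intros hu.
 replace ((cos (2*r) - cos (2*u+2*r))^2 + (sin (2*r) - sin (2*u+2*r))^2) with
   (2 - 2*(cos (2*u+2*r) * cos (2*r) + sin (2*u+2*r) * sin (2*r))).
 2:{ generalize (sin2_cos2 (2*r)) (sin2_cos2 (2*u+2*r)). unfold Rsqr. intros. nra. }
 rewrite <- cos_minus. replace (2*u+2*r - 2*r) with (2*u) by ring. rewrite cos_2a_sin.
 assert (0 < sin u) by (apply sin_gt_0; lra). nra. Qed.

Lemma Q_to_R p q x1 y1 x2 y2 : x1*x1+y1*y1 = 1 -> x2*x2+y2*y2 = 1 -> Cx.Qf p q (x1,y1) (x2,y2) = RtoC 0 ->
  (1-p)*x1*x2 + (1+p)*y1*y2 - q = 0.
Proof. intros h1 h2 hQ. rewrite (Cx.bridge_Q p q _ _ _ _ h1 h2) in hQ.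
 assert (n1 := Cx.unit_nz _ _ h1). assert (n2 := Cx.unit_nz _ _ h2).
 set (R0 := (1-p)*x1*x2 + (1+p)*y1*y2 - q) in *.
 assert (Z : (RtoC R0 * (2*(x1,y1)*(x2,y2)) = RtoC 0)%C) by (rewrite <- hQ; ring).
 apply Cx.Cmul_eq0 in Z.
 - apply RtoC_inj. exact Z.
 - apply Cmult_neq_0; [apply Cmult_neq_0|]; auto. intro E. injection E. lra.
Qed.

Lemma bwd a b t : 0 < b -> b < a ->
  exists x1 y1 x2 y2 x3 y3 K, TP a b x1 y1 x2 y2 x3 y3 K (cos t) (sin t) /\
    three_periodic a b (a*x1,b*y1) (a*x2,b*y2) (a*x3,b*y3).
Proof. intros hb hab. assert (ha : 0 < a) by lra.
 assert (pb := p0_bounds a b hb hab). assert (hc := c2_pos a b hb hab). assert (pq := p0_quad a b hb hab).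
 set (p := p0 a b) in *.
 destruct (roots_exist p t pb) as (r0 & r1 & r2 & g0 & g1 & g2 & l01 & l12 & l02).
 assert (c0 := root_cubic p t r0 g0). assert (c1 := root_cubic p t r1 g1). assert (c2 := root_cubic p t r2 g2).
 cbv zeta in c0, c1, c2.
 assert (u1 : cos (2*r0) * cos (2*r0) + sin (2*r0) * sin (2*r0) = 1) by (generalize (sin2_cos2 (2*r0)); unfold Rsqr; lra).
 assert (u2 : cos (2*r1) * cos (2*r1) + sin (2*r1) * sin (2*r1) = 1) by (generalize (sin2_cos2 (2*r1)); unfold Rsqr; lra).
 assert (u3 : cos (2*r2) * cos (2*r2) + sin (2*r2) * sin (2*r2) = 1) by (generalize (sin2_cos2 (2*r2)); unfold Rsqr; lra).
 assert (d12 : 0 < (cos (2*r0) - cos (2*r1))^2 + (sin (2*r0) - sin (2*r1))^2).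
 { replace (2*r1) with (2*(r1-r0)+2*r0) by ring. apply circ_sep. lra. }
 assert (d13 : 0 < (cos (2*r0) - cos (2*r2))^2 + (sin (2*r0) - sin (2*r2))^2).
 { replace (2*r2) with (2*(r2-r0)+2*r0) by ring. apply circ_sep. lra. }
 assert (d23 : 0 < (cos (2*r1) - cos (2*r2))^2 + (sin (2*r1) - sin (2*r2))^2).
 { replace (2*r2) with (2*(r2-r1)+2*r1) by ring. apply circ_sep. lra. }
 set (x1 := cos (2*r0)) in *. set (y1 := sin (2*r0)) in *.
 set (x2 := cos (2*r1)) in *. set (y2 := sin (2*r1)) in *.
 set (x3 := cos (2*r2)) in *. set (y3 := sin (2*r2)) in *.
 clearbody x1 y1 x2 y2 x3 y3.
 assert (z12 : ((x1,y1):C) <> (x2,y2)). { intro E. injection E. intros. subst. lra. }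
 assert (z13 : ((x1,y1):C) <> (x3,y3)). { intro E. injection E. intros. subst. lra. }
 assert (z23 : ((x2,y2):C) <> (x3,y3)). { intro E. injection E. intros. subst. lra. }
 destruct (Cx.vieta _ _ _ _ _ _ z12 z13 z23 c0 c1 c2) as (S1 & S2 & S3).
 set (K := sqrt (p/(a^2-b^2))).
 assert (hK : 0 < K) by (apply sqrt_lt_R0; apply Rdiv_lt_0_compat; lra).
 assert (hKp : K^2*(a^2-b^2) = p) by (unfold K; rewrite pow2_sqrt; [field; lra| apply Rlt_le, Rdiv_lt_0_compat; lra]).
 set (q := 1 - K^2*(a^2+b^2)).
 assert (hq : 2*q = p*p-1).
 { unfold q. assert (K^2 = p/(a^2-b^2)) by (rewrite <- hKp; field; lra). rewrite H.
   apply Rmult_eq_reg_l with (a^2-b^2); [|lra]. field_simplify; [|lra]. nra. }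
 assert (s1 : (((x1,y1):C)+(x2,y2)+(x3,y3) = - RtoC (K^2*(a^2-b^2))*(((x1,y1):C)*(x2,y2)*(x3,y3)))%C).
 { rewrite S1, S3, hKp. ring. }
 assert (s2 : (((x1,y1):C)*(x2,y2)+((x2,y2):C)*(x3,y3)+((x3,y3):C)*(x1,y1) = - RtoC (K^2*(a^2-b^2)))%C).
 { rewrite S2, hKp. ring. }
 rewrite <- hKp in hq.
 assert (Q12 := Cx.Q_from_sigma _ q _ _ _ hq s1 s2).
 assert (Q13 : Cx.Qf (K^2*(a^2-b^2)) q (x1,y1) (x3,y3) = RtoC 0).
 { apply (Cx.Q_from_sigma _ q _ _ (x2,y2) hq).
   - replace (((x1,y1):C)+(x3,y3)+(x2,y2))%C with (((x1,y1):C)+(x2,y2)+(x3,y3))%C by ring. rewrite s1. ring.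
   - rewrite <- s2. ring. }
 assert (Q23 : Cx.Qf (K^2*(a^2-b^2)) q (x2,y2) (x3,y3) = RtoC 0).
 { apply (Cx.Q_from_sigma _ q _ _ (x1,y1) hq).
   - replace (((x2,y2):C)+(x3,y3)+(x1,y1))%C with (((x1,y1):C)+(x2,y2)+(x3,y3))%C by ring. rewrite s1. ring.
   - rewrite <- s2. ring. }
 apply Q_to_R in Q12; auto. apply Q_to_R in Q13; auto. apply Q_to_R in Q23; auto.
 unfold q in Q12, Q13, Q23.
 assert (m12 := m_pos _ _ _ _ u1 u2 d12). assert (m13 := m_pos _ _ _ _ u1 u3 d13). assert (m23 := m_pos _ _ _ _ u2 u3 d23).
 assert (e12 := K_from_R _ _ _ _ a b K u1 u2 m12 hK Q12).
 assert (e13 := K_from_R _ _ _ _ a b K u1 u3 m13 hK Q13).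
 assert (e23 := K_from_R _ _ _ _ a b K u2 u3 m23 hK Q23).
 rewrite hKp in s1, s2.
 assert (TPh : TP a b x1 y1 x2 y2 x3 y3 K (cos t) (sin t)).
 { unfold TP. repeat split; auto. rewrite S3. ring. }
 exists x1, y1, x2, y2, x3, y3, K. split; auto.
 assert (nd := TP_cross _ _ _ _ _ _ _ _ _ _ _ hb hab TPh).
 assert (nb1 : normal_bisects a b (a*x1,b*y1) (a*x2,b*y2) (a*x3,b*y3)) by (apply refl_step_bwd with K; auto).
 assert (nd2 : (a*x3-a*x2)*(b*y1-b*y2) - (b*y3-b*y2)*(a*x1-a*x2) <> 0) by (intro E; apply nd; rewrite <- E; ring).
 assert (nd3 : (a*x1-a*x3)*(b*y2-b*y3) - (b*y1-b*y3)*(a*x2-a*x3) <> 0) by (intro E; apply nd; rewrite <- E; ring).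
 assert (e21 : Defs.dist (a*x2,b*y2) (a*x1,b*y1) = (1 - x2*x1 - y2*y1)/K).
 { rewrite ddist_sym, e12. f_equal. ring. }
 assert (e31 : Defs.dist (a*x3,b*y3) (a*x1,b*y1) = (1 - x3*x1 - y3*y1)/K).
 { rewrite ddist_sym, e13. f_equal. ring. }
 assert (e32 : Defs.dist (a*x3,b*y3) (a*x2,b*y2) = (1 - x3*x2 - y3*y2)/K).
 { rewrite ddist_sym, e23. f_equal. ring. }
 assert (nb2 : normal_bisects a b (a*x2,b*y2) (a*x3,b*y3) (a*x1,b*y1)).
 { apply refl_step_bwd with K; auto; nra. }
 assert (nb3 : normal_bisects a b (a*x3,b*y3) (a*x1,b*y1) (a*x2,b*y2)).
 { apply refl_step_bwd with K; auto; nra. }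
 assert (o1 : on_ellipse a b (a*x1,b*y1)).
 { unfold on_ellipse. cbn [fst snd]. transitivity (x1*x1+y1*y1); [field; lra|auto]. }
 assert (o2 : on_ellipse a b (a*x2,b*y2)).
 { unfold on_ellipse. cbn [fst snd]. transitivity (x2*x2+y2*y2); [field; lra|auto]. }
 assert (o3 : on_ellipse a b (a*x3,b*y3)).
 { unfold on_ellipse. cbn [fst snd]. transitivity (x3*x3+y3*y3); [field; lra|auto]. }
 unfold three_periodic. repeat split; auto.
Qed.
End Cx8.

Lemma unit_angle C S : C*C+S*S = 1 -> exists t, cos t = C /\ sin t = S.
Proof. intros H.
 assert (hb : -1 <= C <= 1) by nra.
 assert (E : sqrt (1 - C²) = Rabs S).
 { rewrite <- sqrt_Rsqr_abs. f_equal. unfold Rsqr. lra. }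
 destruct (Rle_lt_dec 0 S) as [hs|hs].
 - exists (acos C). split; [apply cos_acos; auto|]. rewrite sin_acos; auto. rewrite E. apply Rabs_right. lra.
 - exists (- acos C). rewrite cos_neg, sin_neg. split; [apply cos_acos; auto|]. rewrite sin_acos; auto. rewrite E.
   rewrite Rabs_left; lra.
Qed.

Lemma cont_at f x0 eps : continuity f -> 0 < eps -> exists d, 0 < d /\ forall x, Rabs (x - x0) < d -> Rabs (f x - f x0) < eps.
Proof. intros hc he. specialize (hc x0). unfold continuity_pt, continue_in, limit1_in, limit_in in hc.
 destruct (hc eps he) as [d [hd H]]. exists d. split; auto. intros x hx.
 destruct (Req_dec x x0) as [->|ne].
 - replace (f x0 - f x0) with 0 by ring. rewrite Rabs_R0. auto.
 - apply (H x). split; [unfold D_x, no_cond; auto|]. simpl. unfold R_dist. auto.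
Qed.

Lemma coef_facts a b : 0 < b -> b < a ->
  a^2 * A4 (p0 a b) = - k4 a b /\ b^2 * B4 (p0 a b) = - k4 a b /\
  a^2 * Cx2.al10 (p0 a b) = - k10 a b /\ b^2 * Cx2.be10 (p0 a b) = - k10 a b /\
  0 < k4 a b /\ 0 < k10 a b.
Proof. intros hb hab.
 assert (pb := p0_bounds a b hb hab). assert (A2 := a2_eq a b hb hab). assert (B2 := b2_eq a b hb hab).
 assert (hc := c2_pos a b hb hab). assert (h4 := k4_eq a b hb hab). assert (h10 := k10_eq a b hb hab).
 set (p := p0 a b) in *. set (c2 := a^2-b^2) in *.
 assert (A2' : a^2 = c2*(3-p)*(1+p)/(4*p)) by (rewrite <- A2; field; lra).
 assert (B2' : b^2 = c2*(3+p)*(1-p)/(4*p)) by (rewrite <- B2; field; lra).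
 rewrite h4, h10, A2', B2'. unfold A4, B4, Cx2.al10, Cx2.be10.
 repeat split.
 - field. repeat split; lra.
 - field. repeat split; lra.
 - field. repeat split; nra.
 - field. repeat split; nra.
 - apply Rdiv_lt_0_compat; [|lra]. apply Rmult_lt_0_compat; nra.
 - apply Rdiv_lt_0_compat; [|lra]. apply Rmult_lt_0_compat; nra.
Qed.

Lemma ell_unit a b k A B x y : 0 < a -> 0 < b -> 0 < k -> a^2*A = -k -> b^2*B = -k ->
  on_ellipse (k/a) (k/b) (x,y) -> (x/(a*A))*(x/(a*A)) + (y/(b*B))*(y/(b*B)) = 1.
Proof. intros ha hb hk hA hB H. unfold on_ellipse in H. simpl in H.
 assert (A = -k/a^2) by (rewrite <- hA; field; lra). assert (B = -k/b^2) by (rewrite <- hB; field; lra).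
 subst A B. rewrite <- H. field. repeat split; lra. Qed.

Lemma ell_point a b A B x y : 0 < a -> 0 < b -> A <> 0 -> B <> 0 ->
  (x,y) = (a*(A*(x/(a*A))), b*(B*(y/(b*B)))).
Proof. intros. f_equal; field; split; lra. Qed.

Lemma sq_shift c s C' S' : c*c+s*s=1 -> C'*C'+S'*S'=1 -> c*c = (c*C' - s*S')*(c*C' - s*S') ->
  S'*(S'*(c*c - s*s) + C'*(2*c*s)) = 0.
Proof. intros. nsatz. Qed.

Lemma three_cos t u : 0 < u < 1 -> cos t * cos t = cos (t+u) * cos (t+u) -> cos t * cos t = cos (t+2*u) * cos (t+2*u) -> False.
Proof. intros hu h1 h2.
 assert (PI1 := PI2_1).
 assert (su : 0 < sin u) by (apply sin_gt_0; lra).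
 assert (cu : 0 < cos u) by (apply cos_gt_0; lra).
 assert (ut : cos t * cos t + sin t * sin t = 1) by (generalize (sin2_cos2 t); unfold Rsqr; lra).
 assert (uu : cos u * cos u + sin u * sin u = 1) by (generalize (sin2_cos2 u); unfold Rsqr; lra).
 rewrite cos_plus in h1, h2. rewrite cos_2a, sin_2a in h2.
 set (c := cos t) in *. set (s := sin t) in *. set (C := cos u) in *. set (S := sin u) in *.
 clearbody c s C S.
 assert (uu2 : (C*C - S*S)*(C*C - S*S) + (2*S*C)*(2*S*C) = 1) by nsatz.
 assert (E1 := sq_shift _ _ _ _ ut uu h1). assert (E2 := sq_shift _ _ _ _ ut uu2 h2).
 apply Rmult_integral in E1. destruct E1 as [E1|E1]; [lra|].
 apply Rmult_integral in E2. destruct E2 as [E2|E2]; [nra|].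
 set (U := c*c - s*s) in *. set (V := 2*c*s) in *.
 assert (UV : U*U + V*V = 1) by (unfold U, V; nsatz).
 assert (V0 : V = 0). { assert (V*(C*C+S*S) = 0) by nra. rewrite uu in H. lra. }
 rewrite V0 in E1. assert (U = 0) by nra. rewrite V0, H in UV. lra.
Qed.

Lemma part_ii a b X : 0 < b -> b < a ->
  locus h10 h10_dom a b X <-> on_ellipse (k10 a b / a) (k10 a b / b) X.
Proof. intros hb hab. split.
 - intros (P1 & P2 & P3 & tp & cd & ->).
   destruct (Cx6.fwd a b P1 P2 P3 hb hab tp) as (x1&y1&x2&y2&x3&y3&K&C0&S0&->&->&->&T).
   destruct (Cx2.center10 _ _ _ _ _ _ _ _ _ _ _ hb hab T) as [_ ->].
   apply on_E10; auto. apply (Cx2.TP_unit _ _ _ _ _ _ _ _ _ _ _ T).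
 - destruct X as [x y]. intros H.
   destruct (coef_facts a b hb hab) as (_&_&f3&f4&_&k10p).
   assert (U := ell_unit a b _ _ _ x y ltac:(lra) hb k10p f3 f4 H).
   destruct (unit_angle _ _ U) as [t [ct st]].
   destruct (Cx8.bwd a b t hb hab) as (x1&y1&x2&y2&x3&y3&K&T&tp).
   exists (a*x1,b*y1), (a*x2,b*y2), (a*x3,b*y3). split; auto.
   destruct (Cx2.center10 _ _ _ _ _ _ _ _ _ _ _ hb hab T) as [cd ->]. split; auto.
   rewrite ct, st. apply ell_point; try lra.
   + intro E. rewrite E in f3. lra.
   + intro E. rewrite E in f4. lra.
Qed.

Lemma locus4_on a b X : 0 < b -> b < a -> locus h4 h4_dom a b X -> on_ellipse (k4 a b / a) (k4 a b / b) X.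
Proof. intros hb hab (P1 & P2 & P3 & tp & cd & ->).
 destruct (Cx6.fwd a b P1 P2 P3 hb hab tp) as (x1&y1&x2&y2&x3&y3&K&C0&S0&->&->&->&T).
 rewrite (Cx3.center4 _ _ _ _ _ _ _ _ _ _ _ hb hab T cd).
 apply Cx3.on_E4; auto. apply (Cx2.TP_unit _ _ _ _ _ _ _ _ _ _ _ T).
Qed.

Lemma abs_le_dist x y u v : Rabs (x - u) <= Defs.dist (x,y) (u,v) /\ Rabs (y - v) <= Defs.dist (x,y) (u,v).
Proof. unfold Defs.dist. simpl. split.
 - rewrite <- sqrt_Rsqr_abs. apply sqrt_le_1_alt. unfold Rsqr. generalize (pow2_ge_0 (y-v)). simpl. lra.
 - rewrite <- sqrt_Rsqr_abs. apply sqrt_le_1_alt. unfold Rsqr. generalize (pow2_ge_0 (x-u)). simpl. lra.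
Qed.

Lemma on_ell_iff k a b Z : 0 < a -> 0 < b -> 0 < k ->
  (on_ellipse (k/a) (k/b) Z <-> a^2*(fst Z)^2 + b^2*(snd Z)^2 = k^2).
Proof. intros ha hb hk. unfold on_ellipse. split; intros H.
 - transitivity (k^2 * (fst Z ^ 2 / (k / a) ^ 2 + snd Z ^ 2 / (k / b) ^ 2)); [field; repeat split; lra|].
   rewrite H. ring.
 - transitivity ((a^2*(fst Z)^2 + b^2*(snd Z)^2)/k^2); [field; repeat split; lra|].
   rewrite H. field. lra.
Qed.

Lemma closure_sub a b X : 0 < b -> b < a ->
  closure (locus h4 h4_dom a b) X -> on_ellipse (k4 a b / a) (k4 a b / b) X.
Proof. intros hb hab H. destruct (coef_facts a b hb hab) as (_&_&_&_&k4p&_).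
 assert (ha : 0 < a) by lra.
 apply on_ell_iff; auto. destruct X as [x y]. simpl.
 set (k := k4 a b) in *.
 destruct (Req_dec (a^2*x^2 + b^2*y^2) (k^2)) as [E|E]; auto. exfalso.
 set (d0 := Rabs (a^2*x^2 + b^2*y^2 - k^2)).
 assert (hd0 : 0 < d0) by (apply Rabs_pos_lt; lra).
 set (M := a^2*(2*Rabs x+1) + b^2*(2*Rabs y+1)).
 assert (hM : 0 < M). { unfold M. generalize (Rabs_pos x) (Rabs_pos y). assert (0 < a^2) by nra. assert (0 < b^2) by nra. nra. }
 set (eps := Rmin 1 (d0/M)).
 assert (he : 0 < eps) by (apply Rmin_glb_lt; [lra| apply Rdiv_lt_0_compat; auto]).
 destruct (H eps he) as [[u v] [LY dY]].
 assert (OY := locus4_on a b _ hb hab LY). apply on_ell_iff in OY; auto. cbn [fst snd] in OY. fold k in OY.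
 destruct (abs_le_dist x y u v) as [b1 b2].
 set (e := Defs.dist (x,y) (u,v)) in *.
 assert (e1 : eps <= 1) by apply Rmin_l. assert (e2 : eps <= d0/M) by apply Rmin_r.
 assert (bx : Rabs (x + u) <= 2*Rabs x + 1).
 { replace (x+u) with (2*x - (x-u)) by ring. eapply Rle_trans; [apply Rabs_triang|].
   rewrite Rabs_Ropp, Rabs_mult, Rabs_right by lra. lra. }
 assert (by' : Rabs (y + v) <= 2*Rabs y + 1).
 { replace (y+v) with (2*y - (y-v)) by ring. eapply Rle_trans; [apply Rabs_triang|].
   rewrite Rabs_Ropp, Rabs_mult, Rabs_right by lra. lra. }
 assert (D : a^2*x^2 + b^2*y^2 - k^2 = a^2*((x-u)*(x+u)) + b^2*((y-v)*(y+v))) by (rewrite <- OY; ring).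
 assert (B : d0 <= a^2*(Rabs (x-u) * Rabs (x+u)) + b^2*(Rabs (y-v) * Rabs (y+v))).
 { unfold d0. rewrite D. eapply Rle_trans; [apply Rabs_triang|].
   rewrite !Rabs_mult. rewrite (Rabs_right (a^2)) by nra. rewrite (Rabs_right (b^2)) by nra. lra. }
 assert (B2 : a^2*(Rabs (x-u) * Rabs (x+u)) + b^2*(Rabs (y-v) * Rabs (y+v)) <= e * M).
 { unfold M. generalize (Rabs_pos (x-u)) (Rabs_pos (x+u)) (Rabs_pos (y-v)) (Rabs_pos (y+v)). intros.
   assert (0 < a^2) by nra. assert (0 < b^2) by nra.
   assert (Rabs (x-u) * Rabs (x+u) <= e * (2*Rabs x+1)) by (apply Rmult_le_compat; auto).
   assert (Rabs (y-v) * Rabs (y+v) <= e * (2*Rabs y+1)) by (apply Rmult_le_compat; auto).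
   nra. }
 assert (e * M < eps * M) by (apply Rmult_lt_compat_r; auto).
 assert (eps * M <= d0) by (apply Rmult_le_reg_r with (/M); [apply Rinv_0_lt_compat; auto|]; rewrite Rmult_assoc, Rinv_r; [|lra]; lra).
 lra.
Qed.

Lemma dense a b X : 0 < b -> b < a -> on_ellipse (k4 a b / a) (k4 a b / b) X -> closure (locus h4 h4_dom a b) X.
Proof. intros hb hab H eps heps. assert (ha : 0 < a) by lra.
 destruct (coef_facts a b hb hab) as (f1&f2&_&_&k4p&_).
 set (A := A4 (p0 a b)) in *. set (B := B4 (p0 a b)) in *. set (k := k4 a b) in *.
 assert (nA : A <> 0) by (intro E; rewrite E in f1; lra).
 assert (nB : B <> 0) by (intro E; rewrite E in f2; lra).
 destruct X as [x y].
 assert (U := ell_unit a b _ _ _ x y ha hb k4p f1 f2 H).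
 destruct (unit_angle _ _ U) as [t0 [ct st]].
 set (L := (a*A)^2 + (b*B)^2).
 assert (hL : 0 <= L) by (unfold L; generalize (pow2_ge_0 (a*A)) (pow2_ge_0 (b*B)); lra).
 set (eta := eps/(L+1)).
 assert (heta : 0 < eta) by (apply Rdiv_lt_0_compat; lra).
 destruct (cont_at cos t0 eta continuity_cos heta) as [d1 [hd1 D1]].
 destruct (cont_at sin t0 eta continuity_sin heta) as [d2 [hd2 D2]].
 set (d := Rmin d1 d2).
 assert (hd : 0 < d) by (apply Rmin_glb_lt; auto).
 assert (good : forall t, Rabs (t - t0) < d ->
    (exists Y, locus h4 h4_dom a b Y /\ Defs.dist (x,y) Y < eps) \/ (A * cos t)^2 + (B * sin t)^2 = 1).
 { intros t ht.
   destruct (Cx8.bwd a b t hb hab) as (x1&y1&x2&y2&x3&y3&K&T&tp).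
   destruct (classic (center_defined h4 h4_dom (a*x1,b*y1) (a*x2,b*y2) (a*x3,b*y3))) as [cd|ncd].
   - left. exists (a*(A*cos t), b*(B*sin t)). split.
     + exists (a*x1,b*y1), (a*x2,b*y2), (a*x3,b*y3). split; auto. split; auto.
       symmetry. apply (Cx3.center4 _ _ _ _ _ _ _ _ _ _ _ hb hab T cd).
     + assert (c1 : Rabs (cos t - cos t0) < eta) by (apply D1; eapply Rlt_le_trans; [exact ht| apply Rmin_l]).
       assert (c2 : Rabs (sin t - sin t0) < eta) by (apply D2; eapply Rlt_le_trans; [exact ht| apply Rmin_r]).
       apply Rabs_def2 in c1. apply Rabs_def2 in c2.
       assert (q1 : (cos t - cos t0)^2 <= eta^2) by nra.
       assert (q2 : (sin t - sin t0)^2 <= eta^2) by nra.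
       assert (Q : Defs.dist (x,y) (a*(A*cos t), b*(B*sin t)) ^2 <= L * eta^2).
       { rewrite ddist_sq. cbn [fst snd].
         replace x with (a*A*cos t0) by (rewrite ct; field; split; lra).
         replace y with (b*B*sin t0) by (rewrite st; field; split; lra).
         unfold L.
         replace ((a * A * cos t0 - a * (A * cos t)) ^ 2 + (b * B * sin t0 - b * (B * sin t)) ^ 2) with
           ((a*A)^2 * (cos t - cos t0)^2 + (b*B)^2*(sin t - sin t0)^2) by ring.
         generalize (pow2_ge_0 (a*A)) (pow2_ge_0 (b*B)). intros. nra. }
       assert (Leta : L * eta^2 < eps^2).
       { unfold eta. replace (L * (eps / (L + 1)) ^ 2) with (eps^2 * (L/((L+1)*(L+1)))) by (field; lra).
         assert (L/((L+1)*(L+1)) < 1).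
         { apply Rmult_lt_reg_r with ((L+1)*(L+1)); [nra|]. field_simplify; [nra|lra]. }
         assert (0 < eps^2) by nra. nra. }
       assert (hdn := ddist_nonneg (x,y) (a*(A*cos t), b*(B*sin t))).
       set (e := Defs.dist (x,y) (a*(A*cos t), b*(B*sin t))) in *.
       destruct (Rlt_le_dec e eps); auto. exfalso. assert (eps^2 <= e^2) by nra. lra.
   - right. apply (Cx3.right4 _ _ _ _ _ _ _ _ _ _ _ hb hab T ncd). }
 set (u := Rmin (d/3) (1/2)).
 assert (hu : 0 < u) by (apply Rmin_glb_lt; lra).
 assert (hu1 : u <= d/3) by apply Rmin_l. assert (hu2 : u <= 1/2) by apply Rmin_r.
 destruct (good t0) as [G0|R0]. { replace (t0 - t0) with 0 by ring. rewrite Rabs_R0. auto. }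
 { destruct G0 as [Y [LY dY]]. exists Y. auto. }
 destruct (good (t0+u)) as [G1|R1]. { replace (t0 + u - t0) with u by ring. rewrite Rabs_right; lra. }
 { destruct G1 as [Y [LY dY]]. exists Y. auto. }
 destruct (good (t0+2*u)) as [G2|R2]. { replace (t0 + 2*u - t0) with (2*u) by ring. rewrite Rabs_right; lra. }
 { destruct G2 as [Y [LY dY]]. exists Y. auto. }
 exfalso.
 assert (AB : A^2 <> B^2).
 { intro E. assert (A = -k/a^2) by (rewrite <- f1; field; lra). assert (B = -k/b^2) by (rewrite <- f2; field; lra).
   rewrite H0, H1 in E. assert (a^4 = b^4).
   { apply Rmult_eq_reg_l with (k^2); [|apply pow_nonzero; lra].
     apply Rmult_eq_reg_l with (/(a^4*b^4)); [|apply Rinv_neq_0_compat; apply Rmult_integral_contrapositive; split; apply pow_nonzero; lra].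
     field_simplify; [|lra|lra]. field_simplify in E; [|lra|lra]. nra. }
   assert (a^2 = b^2) by nra. nra. }
 assert (sc : forall t, (A*cos t)^2 + (B*sin t)^2 = 1 -> (A^2 - B^2) * (cos t * cos t) = 1 - B^2).
 { intros t ht. generalize (sin2_cos2 t). unfold Rsqr. intros. nra. }
 apply sc in R0. apply sc in R1. apply sc in R2.
 apply (three_cos t0 u); [lra| |].
 - apply Rmult_eq_reg_l with (A^2-B^2); [|lra]. lra.
 - apply Rmult_eq_reg_l with (A^2-B^2); [|lra]. lra.
Qed.


Theorem theorem1 (a b : R) (hb : 0 < b) (hab : b < a) :
  (forall X : pt,
     closure (locus h4 h4_dom a b) X <->
     on_ellipse (k4 a b / a) (k4 a b / b) X) /\
  (forall X : pt,
     locus h10 h10_dom a b X <->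
     on_ellipse (k10 a b / a) (k10 a b / b) X).
Proof.
  split.
  - intros X. split; [apply closure_sub; auto | apply dense; auto].
  - intros X. apply part_ii; auto.
Qed.
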